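(* Let $\vartheta$ be a primitive semi-compatible random substitution with topological entropy $s$. If $\vartheta$ satisfies the identical set condition, then $s=\frac{1}{\lambda}\bm q_1^\intercal\bm R$. If $\vartheta$ satisfies the disjoint set condition, then $s=\frac{1}{\lambda-1}\bm q_1^\intercal\bm R$.
   Context: Let $\mathcal A=\{a_1,\dots,a_n\}$ be a finite alphabet, $\mathcal A^+$ the finite non-empty words over $\mathcal A$. A random substitution is a map $\vartheta$ from $\mathcal A$ to finite non-empty subsets of $\mathcal A^+$, extended to words by $\vartheta(u_1\cdots u_m)=\{w_1\cdots w_m: w_k\in\vartheta(u_k)\}$ and to sets of words by unions; powers $\vartheta^m$ are compositions. $|u|_a$ is the number of occurrences of letter $a$ in $u$; $\Phi(u)=(|u|_{a_1},\dots,|u|_{a_n})^\intercal$. $\vartheta$ is semi-compatible if for each $a$ all words in $\vartheta(a)$ have the same $\Phi$. Substitution matrix $M_{ij}=|u|_{a_i}$, $u\in\vartheta(a_j)$; primitive means $M$ primitive, with Perron–Frobenius eigenvalue $\lambda$ and right PF eigenvector $\bm R$, $\|\bm R\|_1=1$. $\bm q_1=(\log\#\vartheta(a_1),\dots,\log\#\vartheta(a_n))^\intercal$. The language $\mathcal L$ is the set of all subwords of words in $\vartheta^m(a)$, $a\in\mathcal A$, $m\in\mathbb N$; $\mathcal L_\ell$ its words of length $\ell$; topological entropy $s=\lim_{\ell\to\infty}\frac1\ell\log\#\mathcal L_\ell$. Identical set condition: for all $i$, $m\in\mathbb N$, $u,v\in\vartheta(a_i)$: $\vartheta^m(u)=\vartheta^m(v)$.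 Disjoint set condition: for all $i$, $m\in\mathbb N$, $u\neq v\in\vartheta(a_i)$: $\vartheta^m(u)\cap\vartheta^m(v)=\varnothing$. *)

(* Defs.v *)
(* words are lists of letters, letters a_1..a_n are 0..n-1. *)
From Stdlib Require Import Reals List Arith.
Import ListNotations.
Open Scope R_scope.

(* A random substitution: each letter is sent to a finite set of words,
   represented by a duplicate-free list. *)
Definition rsubst := nat -> list (list nat).

Fixpoint subst_word (th : rsubst) (u : list nat) : list (list nat) :=
  match u with
  | [] => [ [] ]
  | a :: u' => flat_map (fun w => map (fun v => w ++ v) (subst_word th u')) (th a)
  end.

Definition subst_set (th : rsubst) (S : list (list nat)) : list (list nat) :=
  flat_map (subst_word th) S.

Fixpoint subst_pow (th : rsubst) (m : nat) (u : list nat) : list (list nat) :=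
  match m with
  | O => [u]
  | S k => subst_set th (subst_pow th k u)
  end.

Definition occ (a : nat) (u : list nat) : nat := count_occ Nat.eq_dec u a.

Definition is_random_subst (n : nat) (th : rsubst) : Prop :=
  forall a, (a < n)%nat ->
    th a <> [] /\ NoDup (th a) /\
    (forall w, In w (th a) -> w <> [] /\ forall b, In b w -> (b < n)%nat).

Definition semi_compatible (n : nat) (th : rsubst) : Prop :=
  forall a, (a < n)%nat -> forall u v, In u (th a) -> In v (th a) ->
    forall b, occ b u = occ b v.

(* substitution matrix M_ij = |u|_{a_i}, u in theta(a_j) *)
Definition subst_matrix (th : rsubst) (i j : nat) : nat := occ i (hd [] (th j)).

Fixpoint nsum (n : nat) (f : nat -> nat) : nat :=
  match n with O => O | S k => (nsum k f + f k)%nat end.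

Fixpoint rsum (n : nat) (f : nat -> R) : R :=
  match n with O => 0 | S k => rsum k f + f k end.

Fixpoint mat_pow (n : nat) (M : nat -> nat -> nat) (k : nat) : nat -> nat -> nat :=
  match k with
  | O => fun i j => if Nat.eqb i j then 1%nat else 0%nat
  | S k' => fun i j => nsum n (fun l => (mat_pow n M k' i l * M l j)%nat)
  end.

Definition primitive_mx (n : nat) (M : nat -> nat -> nat) : Prop :=
  exists k, (1 <= k)%nat /\ forall i j, (i < n)%nat -> (j < n)%nat -> (0 < mat_pow n M k i j)%nat.

(* For primitive_mx M this pair
   is unique by the Perron-Frobenius theorem. *)
Definition PF_pair (n : nat) (M : nat -> nat -> nat) (lam : R) (Rv : nat -> R) : Prop :=
  (forall i, (i < n)%nat -> 0 < Rv i) /\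
  rsum n Rv = 1 /\
  (forall i, (i < n)%nat -> rsum n (fun j => INR (M i j) * Rv j) = lam * Rv i).

Definition q1 (th : rsubst) (i : nat) : R := ln (INR (length (th i))).

Definition subword (w v : list nat) : Prop := exists p s, p ++ w ++ s = v.

Definition in_language (n : nat) (th : rsubst) (w : list nat) : Prop :=
  exists a m v, (a < n)%nat /\ In v (subst_pow th m [a]) /\ subword w v.

Definition card_lang (n : nat) (th : rsubst) (l c : nat) : Prop :=
  exists L : list (list nat), NoDup L /\ length L = c /\
    forall w, In w L <-> (in_language n th w /\ length w = l).

Definition top_entropy (n : nat) (th : rsubst) (s : R) : Prop :=
  (exists c : nat -> nat, forall l, card_lang n th l (c l)) /\
  forall c : nat -> nat, (forall l, card_lang n th l (c l)) ->
    Un_cv (fun l => ln (INR (c l)) / INR l) s.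

Definition identical_set_cond (n : nat) (th : rsubst) : Prop :=
  forall a, (a < n)%nat -> forall m, (1 <= m)%nat -> forall u v,
    In u (th a) -> In v (th a) ->
    forall w, In w (subst_pow th m u) <-> In w (subst_pow th m v).

Definition disjoint_set_cond (n : nat) (th : rsubst) : Prop :=
  forall a, (a < n)%nat -> forall m, (1 <= m)%nat -> forall u v,
    In u (th a) -> In v (th a) -> u <> v ->
    forall w, ~ (In w (subst_pow th m u) /\ In w (subst_pow th m v)).

(* Main.v *)
Require Import Defs.
From Stdlib Require Import Reals List Arith.
Open Scope R_scope.
From Stdlib Require Import Lia Lra ClassicalEpsilon.
Import ListNotations.

Section Words.
Variable th : rsubst.

Definition cat_set (X Y : list (list nat)) : list (list nat) :=
  flat_map (fun x => map (fun y => x ++ y) Y) X.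

Lemma in_cat_set X Y w : In w (cat_set X Y) <-> exists x y, w = x ++ y /\ In x X /\ In y Y.
Proof.
  unfold cat_set; rewrite in_flat_map; split.
  - intros [x [Hx Hw]]; apply in_map_iff in Hw; destruct Hw as [y [<- Hy]]; eauto.
  - intros [x [y [-> [Hx Hy]]]]; exists x; split; auto; apply in_map_iff; eauto.
Qed.

Lemma subst_word_cons a u : subst_word th (a :: u) = cat_set (th a) (subst_word th u).
Proof. reflexivity. Qed.

Lemma in_subst_word_app u v w : In w (subst_word th (u ++ v)) <->
  exists w1 w2, w = w1 ++ w2 /\ In w1 (subst_word th u) /\ In w2 (subst_word th v).
Proof.
  revert w; induction u as [|a u IH]; intros w; simpl app.
  - simpl; split.
    + intros H; exists [], w; simpl; auto.
    + intros [w1 [w2 [-> [[<-|[]] H2]]]]; exact H2.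
  - rewrite subst_word_cons, in_cat_set; split.
    + intros [x [y [-> [Hx Hy]]]]. apply IH in Hy. destruct Hy as [w1 [w2 [-> [H1 H2]]]].
      exists (x ++ w1), w2; split; [now rewrite app_assoc|split; auto].
      rewrite subst_word_cons, in_cat_set; eauto.
    + intros [w1 [w2 [-> [H1 H2]]]]. rewrite subst_word_cons, in_cat_set in H1.
      destruct H1 as [x [y [-> [Hx Hy]]]]. exists x, (y ++ w2); split; [now rewrite app_assoc|].
      split; auto. apply IH; eauto.
Qed.

Lemma in_subst_set S w : In w (subst_set th S) <-> exists v, In v S /\ In w (subst_word th v).
Proof. unfold subst_set; rewrite in_flat_map; split; intros [v [? ?]]; eauto. Qed.

Lemma in_subst_pow_app m u v w : In w (subst_pow th m (u ++ v)) <->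
  exists w1 w2, w = w1 ++ w2 /\ In w1 (subst_pow th m u) /\ In w2 (subst_pow th m v).
Proof.
  revert w; induction m as [|m IH]; intros w; simpl.
  - split.
    + intros [<-|[]]; exists u, v; auto.
    + intros [w1 [w2 [-> [[<-|[]] [<-|[]]]]]]; auto.
  - rewrite in_subst_set; split.
    + intros [z [Hz Hw]]. apply IH in Hz. destruct Hz as [z1 [z2 [-> [H1 H2]]]].
      apply in_subst_word_app in Hw. destruct Hw as [w1 [w2 [-> [Hw1 Hw2]]]].
      exists w1, w2; repeat split; auto; apply in_subst_set; eauto.
    + intros [w1 [w2 [-> [H1 H2]]]]. apply in_subst_set in H1, H2.
      destruct H1 as [z1 [Hz1 Hw1]]; destruct H2 as [z2 [Hz2 Hw2]].
      exists (z1 ++ z2); split; [apply IH; eauto|apply in_subst_word_app; eauto].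
Qed.

Lemma in_subst_pow_add i k u w : In w (subst_pow th (i + k) u) <->
  exists v, In v (subst_pow th k u) /\ In w (subst_pow th i v).
Proof.
  revert w; induction i as [|i IH]; intros w; simpl.
  - split; [intros H; exists w; auto| intros [v [Hv [<-|[]]]]; auto].
  - rewrite in_subst_set; split.
    + intros [z [Hz Hw]]; apply IH in Hz; destruct Hz as [v [Hv Hz]].
      exists v; split; auto; apply in_subst_set; eauto.
    + intros [v [Hv Hw]]; apply in_subst_set in Hw; destruct Hw as [z [Hz Hw]].
      exists z; split; auto; apply IH; eauto.
Qed.

Lemma in_subst_word_single a w : In w (subst_word th [a]) <-> In w (th a).
Proof.
  rewrite subst_word_cons, in_cat_set; simpl; split.
  - intros [x [y [-> [Hx [<-|[]]]]]]; now rewrite app_nil_r.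
  - intros H; exists w, []; rewrite app_nil_r; auto.
Qed.

Lemma in_subst_pow_S m u w : In w (subst_pow th (S m) u) <->
  exists v, In v (subst_word th u) /\ In w (subst_pow th m v).
Proof.
  replace (S m) with (m + 1)%nat by lia. rewrite in_subst_pow_add.
  change (subst_pow th 1 u) with (subst_set th [u]).
  split; intros [v [Hv Hw]]; exists v; split; auto.
  - apply in_subst_set in Hv; destruct Hv as [z [[<-|[]] Hz]]; auto.
  - apply in_subst_set; exists u; simpl; auto.
Qed.

Lemma in_subst_pow_S_single m a w : In w (subst_pow th (S m) [a]) <->
  exists v, In v (th a) /\ In w (subst_pow th m v).
Proof.
  rewrite in_subst_pow_S; split; intros [v [Hv Hw]]; exists v; split; auto;
  apply in_subst_word_single; auto.
Qed.

Lemma in_subst_pow_cons m a u w : In w (subst_pow th m (a :: u)) <->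
  exists w1 w2, w = w1 ++ w2 /\ In w1 (subst_pow th m [a]) /\ In w2 (subst_pow th m u).
Proof. apply (in_subst_pow_app m [a] u). Qed.

Lemma subst_pow_nil m : subst_pow th m [] = [[]].
Proof. induction m; simpl; auto. rewrite IHm; reflexivity. Qed.

End Words.

Lemma nsum_ext n f g : (forall i, (i < n)%nat -> f i = g i) -> nsum n f = nsum n g.
Proof. induction n; simpl; intros H; auto. rewrite IHn, H; auto. Qed.
Lemma nsum_add n f g : nsum n (fun i => f i + g i)%nat = (nsum n f + nsum n g)%nat.
Proof. induction n; simpl; auto. rewrite IHn; lia. Qed.
Lemma nsum_mul_l n c f : nsum n (fun i => c * f i)%nat = (c * nsum n f)%nat.
Proof. induction n; simpl; auto. rewrite IHn; lia. Qed.
Lemma nsum_mul_r n c f : nsum n (fun i => f i * c)%nat = (nsum n f * c)%nat.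
Proof. induction n; simpl; auto. rewrite IHn; lia. Qed.
Lemma nsum_swap n m f : nsum n (fun i => nsum m (fun j => f i j)) = nsum m (fun j => nsum n (fun i => f i j)).
Proof.
  induction n; simpl.
  - induction m; simpl; auto. rewrite <- IHm; auto.
  - rewrite IHn, <- nsum_add; auto.
Qed.
Lemma nsum_zero n f : (forall i, (i < n)%nat -> f i = 0%nat) -> nsum n f = 0%nat.
Proof. intros H; rewrite (nsum_ext n f (fun _ => 0%nat)); auto. induction n; simpl; auto. rewrite IHn; auto. Qed.
Lemma nsum_delta n a f : nsum n (fun l => (if Nat.eqb a l then 1 else 0) * f l)%nat =
  if Nat.ltb a n then f a else 0%nat.
Proof.
  induction n; simpl; auto. rewrite IHn.
  destruct (Nat.eqb_spec a n) as [->|Hne].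
  - rewrite (proj2 (Nat.ltb_ge n n)), (proj2 (Nat.ltb_lt n (S n))); lia.
  - destruct (Nat.ltb_spec a n), (Nat.ltb_spec a (S n)); lia.
Qed.
Lemma nsum_delta' n a f : nsum n (fun l => f l * (if Nat.eqb l a then 1 else 0))%nat =
  if Nat.ltb a n then f a else 0%nat.
Proof.
  rewrite <- nsum_delta. apply nsum_ext; intros i _.
  destruct (Nat.eqb_spec i a), (Nat.eqb_spec a i); subst; lia.
Qed.
Lemma nsum_le n f g : (forall i, (i < n)%nat -> f i <= g i)%nat -> (nsum n f <= nsum n g)%nat.
Proof. induction n; simpl; intros H; auto. assert (nsum n f <= nsum n g)%nat by (apply IHn; intros; apply H; lia). specialize (H n ltac:(lia)). lia. Qed.
Lemma nsum_ge_term n f i : (i < n)%nat -> (f i <= nsum n f)%nat.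
Proof. induction n; simpl; intros Hi; [lia|]. destruct (Nat.eq_dec i n); subst; [lia|]. specialize (IHn ltac:(lia)); lia. Qed.

Definition Lt (n : nat) (w : list nat) : Prop := forall b, In b w -> (b < n)%nat.

Lemma Lt_app n u v : Lt n (u ++ v) <-> Lt n u /\ Lt n v.
Proof. unfold Lt; split; [intros H; split; intros b Hb; apply H; apply in_or_app; auto|
  intros [H1 H2] b Hb; apply in_app_or in Hb; destruct Hb; auto]. Qed.
Lemma Lt_cons n a u : Lt n (a :: u) <-> (a < n)%nat /\ Lt n u.
Proof. unfold Lt; simpl; split; [intros H; split; auto|intros [H1 H2] b [<-|Hb]; auto]. Qed.
Lemma Lt_nil n : Lt n [].
Proof. intros b []. Qed.

Lemma length_occ n w : Lt n w -> length w = nsum n (fun b => occ b w).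
Proof.
  induction w as [|a w IH]; intros H; cbn [length].
  - symmetry; apply nsum_zero; auto.
  - apply Lt_cons in H; destruct H as [Ha H]. rewrite IH by auto.
    rewrite (nsum_ext n (fun b => occ b (a :: w)) (fun b => (if Nat.eqb a b then 1 else 0) * 1 + occ b w)%nat).
    + rewrite nsum_add, nsum_delta. destruct (Nat.ltb_spec a n); cbn beta; lia.
    + intros i _. unfold occ; simpl. destruct (Nat.eq_dec a i), (Nat.eqb_spec a i); lia.
Qed.

Section Subst.
Variable n : nat.
Variable th : rsubst.
Hypothesis Hrs : is_random_subst n th.
Hypothesis Hsc : semi_compatible n th.

Notation M := (subst_matrix th).

Lemma Lt_subst_word u w : Lt n u -> In w (subst_word th u) -> Lt n w.
Proof.
  revert w; induction u as [|a u IH]; intros w Hu Hw; simpl in Hw.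
  - destruct Hw as [<-|[]]; apply Lt_nil.
  - apply Lt_cons in Hu; destruct Hu as [Ha Hu].
    change (In w (cat_set (th a) (subst_word th u))) in Hw.
    apply in_cat_set in Hw; destruct Hw as [x [y [-> [Hx Hy]]]].
    apply Lt_app; split; [|eauto]. intros b Hb. exact (proj2 (proj2 (proj2 (Hrs a Ha)) x Hx) b Hb).
Qed.

Lemma Lt_subst_pow m u w : Lt n u -> In w (subst_pow th m u) -> Lt n w.
Proof.
  revert w; induction m; intros w Hu Hw.
  - simpl in Hw; destruct Hw as [<-|[]]; auto.
  - change (In w (subst_set th (subst_pow th m u))) in Hw.
    apply in_subst_set in Hw; destruct Hw as [v [Hv Hw]]. exact (Lt_subst_word v w (IHm v Hu Hv) Hw).
Qed.

Lemma th_nonempty a : (a < n)%nat -> exists x, In x (th a).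
Proof. intros Ha. destruct (th a) as [|x l] eqn:E; [now destruct (Hrs a Ha)|exists x; simpl; auto]. Qed.

Lemma subst_word_nonempty u : Lt n u -> exists w, In w (subst_word th u).
Proof.
  induction u as [|a u IH]; intros Hu; simpl.
  - exists []; auto.
  - apply Lt_cons in Hu; destruct Hu as [Ha Hu]. destruct (IH Hu) as [y Hy].
    destruct (th_nonempty a Ha) as [x Hx]. exists (x ++ y).
    change (In (x ++ y) (cat_set (th a) (subst_word th u))). apply in_cat_set; eauto.
Qed.

Lemma subst_pow_nonempty m u : Lt n u -> exists w, In w (subst_pow th m u).
Proof.
  revert u; induction m; intros u Hu.
  - exists u; simpl; auto.
  - destruct (subst_word_nonempty u Hu) as [v Hv].
    destruct (IHm v (Lt_subst_word u v Hu Hv)) as [w Hw]. exists w.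
    apply in_subst_pow_S; eauto.
Qed.

Lemma occ_th a x b : (a < n)%nat -> In x (th a) -> occ b x = M b a.
Proof.
  intros Ha Hx. unfold subst_matrix. destruct (th a) as [|y l] eqn:E; [destruct Hx|].
  simpl. apply (Hsc a Ha); rewrite E; simpl; auto.
Qed.

Lemma occ_app b u v : occ b (u ++ v) = (occ b u + occ b v)%nat.
Proof. unfold occ; apply count_occ_app. Qed.

Lemma occ_subst_word u w b : Lt n u -> In w (subst_word th u) ->
  occ b w = nsum n (fun l => M b l * occ l u)%nat.
Proof.
  revert w; induction u as [|a u IH]; intros w Hu Hw; simpl in Hw.
  - destruct Hw as [<-|[]]. symmetry; apply nsum_zero; intros; unfold occ; simpl; lia.
  - apply Lt_cons in Hu; destruct Hu as [Ha Hu].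
    change (In w (cat_set (th a) (subst_word th u))) in Hw.
    apply in_cat_set in Hw; destruct Hw as [x [y [-> [Hx Hy]]]].
    rewrite occ_app, (occ_th a x b Ha Hx), (IH y Hu Hy).
    rewrite (nsum_ext n (fun l => M b l * occ l (a :: u))%nat
      (fun l => M b l * (if Nat.eqb l a then 1 else 0) + M b l * occ l u)%nat).
    + rewrite nsum_add, nsum_delta'. destruct (Nat.ltb_spec a n); lia.
    + intros i _. unfold occ; simpl. destruct (Nat.eq_dec a i), (Nat.eqb_spec i a); subst; lia.
Qed.

Lemma occ_subst_pow m u w b : Lt n u -> In w (subst_pow th m u) ->
  occ b w = nsum n (fun l => mat_pow n M m b l * occ l u)%nat.
Proof.
  revert u w; induction m; intros u w Hu Hw.
  - simpl in Hw; destruct Hw as [<-|[]]. simpl. rewrite nsum_delta.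
    destruct (Nat.ltb_spec b n); auto.
    unfold occ. apply count_occ_not_In. intros Hb; apply Hu in Hb; lia.
  - apply in_subst_pow_S in Hw; destruct Hw as [v [Hv Hw]].
    rewrite (IHm v w (Lt_subst_word u v Hu Hv) Hw).
    rewrite (nsum_ext n _ (fun l => nsum n (fun k => mat_pow n M m b l * M l k * occ k u))%nat).
    + rewrite nsum_swap. apply nsum_ext; intros k _. simpl. rewrite <- nsum_mul_r. auto.
    + intros l _. rewrite (occ_subst_word u v l Hu Hv), <- nsum_mul_l.
      apply nsum_ext; intros; lia.
Qed.

Definition lenN m c := nsum n (fun b => mat_pow n M m b c).

Lemma occ_single l c : (c < n)%nat -> occ l [c] = if Nat.eqb l c then 1%nat else 0%nat.
Proof. intros; unfold occ; simpl. destruct (Nat.eq_dec c l), (Nat.eqb_spec l c); subst; lia. Qed.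

Lemma occ_subst_pow_single m c w b : (c < n)%nat -> In w (subst_pow th m [c]) ->
  occ b w = mat_pow n M m b c.
Proof.
  intros Hc Hw. assert (Lt n [c]) as Hu by (apply Lt_cons; split; auto; apply Lt_nil).
  rewrite (occ_subst_pow m [c] w b Hu Hw).
  rewrite (nsum_ext n _ (fun l => mat_pow n M m b l * (if Nat.eqb l c then 1 else 0))%nat).
  - rewrite nsum_delta'. destruct (Nat.ltb_spec c n); lia.
  - intros; rewrite occ_single; auto.
Qed.

Lemma length_subst_pow_single m c w : (c < n)%nat -> In w (subst_pow th m [c]) -> length w = lenN m c.
Proof.
  intros Hc Hw. assert (Lt n [c]) as Hu by (apply Lt_cons; split; auto; apply Lt_nil).
  rewrite (length_occ n w (Lt_subst_pow m [c] w Hu Hw)). unfold lenN.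
  apply nsum_ext; intros; apply occ_subst_pow_single; auto.
Qed.

Lemma lenN_S m c : lenN (S m) c = nsum n (fun i => M i c * lenN m i)%nat.
Proof.
  unfold lenN; simpl. rewrite nsum_swap. apply nsum_ext; intros i _.
  rewrite <- nsum_mul_l. apply nsum_ext; intros; lia.
Qed.

Fixpoint lenv m (v : list nat) : nat :=
  match v with [] => 0%nat | b :: v' => (lenN m b + lenv m v')%nat end.

Lemma length_subst_pow m v w : Lt n v -> In w (subst_pow th m v) -> length w = lenv m v.
Proof.
  revert w; induction v as [|a v IH]; intros w Hv Hw.
  - rewrite subst_pow_nil in Hw; destruct Hw as [<-|[]]; auto.
  - apply Lt_cons in Hv; destruct Hv as [Ha Hv].
    apply in_subst_pow_cons in Hw; destruct Hw as [w1 [w2 [-> [H1 H2]]]].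
    rewrite length_app, (length_subst_pow_single m a w1 Ha H1), (IH w2 Hv H2); auto.
Qed.

End Subst.

Lemma rsum_ext n f g : (forall i, (i < n)%nat -> f i = g i) -> rsum n f = rsum n g.
Proof. induction n; simpl; intros H; auto. rewrite IHn, H; auto. Qed.
Lemma rsum_add n f g : rsum n (fun i => f i + g i) = rsum n f + rsum n g.
Proof. induction n; simpl; [lra|]. rewrite IHn; lra. Qed.
Lemma rsum_scal n c f : rsum n (fun i => c * f i) = c * rsum n f.
Proof. induction n; simpl; [lra|]. rewrite IHn; lra. Qed.
Lemma rsum_scal_r n c f : rsum n (fun i => f i * c) = rsum n f * c.
Proof. induction n; simpl; [lra|]. rewrite IHn; lra. Qed.
Lemma rsum_swap n m f : rsum n (fun i => rsum m (fun j => f i j)) = rsum m (fun j => rsum n (fun i => f i j)).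
Proof.
  induction n; simpl.
  - induction m; simpl; auto. rewrite <- IHm; lra.
  - rewrite IHn, <- rsum_add; auto.
Qed.
Lemma rsum_zero n f : (forall i, (i < n)%nat -> f i = 0) -> rsum n f = 0.
Proof. intros H; rewrite (rsum_ext n f (fun _ => 0)); auto. clear H. induction n; simpl; auto. rewrite IHn; lra. Qed.
Lemma rsum_le n f g : (forall i, (i < n)%nat -> f i <= g i) -> rsum n f <= rsum n g.
Proof. induction n; simpl; intros H; [lra|]. assert (rsum n f <= rsum n g) by (apply IHn; intros; apply H; lia). specialize (H n); assert (Hlt : (n < S n)%nat) by lia; specialize (H Hlt). lra. Qed.
Lemma rsum_nonneg n f : (forall i, (i < n)%nat -> 0 <= f i) -> 0 <= rsum n f.
Proof. intros H. rewrite <- (rsum_zero n (fun _ => 0)) by auto. apply rsum_le; auto. Qed.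
Lemma rsum_pos n f : (0 < n)%nat -> (forall i, (i < n)%nat -> 0 < f i) -> 0 < rsum n f.
Proof.
  intros Hn H. destruct n; [lia|]. simpl.
  assert (0 <= rsum n f) by (apply rsum_nonneg; intros; apply Rlt_le, H; lia).
  specialize (H n); assert (Hlt : (n < S n)%nat) by lia; specialize (H Hlt); lra.
Qed.
Lemma rsum_ge_term n f i : (forall j, (j < n)%nat -> 0 <= f j) -> (i < n)%nat -> f i <= rsum n f.
Proof.
  induction n; simpl; intros H Hi; [lia|].
  destruct (Nat.eq_dec i n); subst.
  - assert (0 <= rsum n f) by (apply rsum_nonneg; intros; apply H; lia). lra.
  - assert (f i <= rsum n f) by (apply IHn; auto; lia). specialize (H n); assert (Hlt : (n < S n)%nat) by lia; specialize (H Hlt); lra.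
Qed.
Lemma rsum_delta n a f : (a < n)%nat -> rsum n (fun l => (if Nat.eqb l a then 1 else 0) * f l) = f a.
Proof.
  induction n; simpl; intros Ha; [lia|].
  destruct (Nat.eqb_spec n a) as [->|Hne].
  - rewrite rsum_zero; [lra|]. intros i Hi. destruct (Nat.eqb_spec i a); [lia|lra].
  - rewrite IHn by lia. lra.
Qed.
Lemma INR_nsum n f : INR (nsum n f) = rsum n (fun i => INR (f i)).
Proof. induction n; simpl; auto. rewrite plus_INR, IHn; auto. Qed.

Definition card (S : list (list nat)) : nat := length (nodup (list_eq_dec Nat.eq_dec) S).

Lemma card_ext A B : (forall w, In w A <-> In w B) -> card A = card B.
Proof.
  intros H; unfold card. apply Nat.le_antisymm; apply NoDup_incl_length; try apply NoDup_nodup;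
  intros w Hw; rewrite nodup_In in *; apply H; auto.
Qed.
Lemma card_NoDup A : NoDup A -> card A = length A.
Proof. intros H; unfold card; rewrite nodup_fixed_point; auto. Qed.
Lemma card_incl A B : NoDup A -> (forall w, In w A -> In w B) -> (length A <= card B)%nat.
Proof. intros HA H; unfold card. apply NoDup_incl_length; auto. intros w Hw; rewrite nodup_In; auto. Qed.
Lemma card_In A w : In w A -> (1 <= card A)%nat.
Proof.
  intros H; unfold card. destruct (nodup (list_eq_dec Nat.eq_dec) A) eqn:E; simpl; [|lia].
  rewrite <- (nodup_In (list_eq_dec Nat.eq_dec)) in H. rewrite E in H; destruct H.
Qed.

Lemma app_inj_len (x1 y1 x2 y2 : list nat) : length x1 = length x2 -> x1 ++ y1 = x2 ++ y2 -> x1 = x2 /\ y1 = y2.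
Proof.
  revert x2; induction x1; intros [|b x2] Hl He; simpl in *; try lia; auto.
  injection He as -> He. destruct (IHx1 x2 ltac:(lia) He) as [-> ->]; auto.
Qed.

Lemma cat_set_NoDup X Y L : NoDup X -> NoDup Y -> (forall x, In x X -> length x = L) ->
  NoDup (cat_set X Y) /\ length (cat_set X Y) = (length X * length Y)%nat.
Proof.
  induction X as [|x X IH]; intros HX HY HL; simpl; [split; auto; constructor|].
  inversion HX as [|? ? Hnx HX']; subst.
  destruct (IH HX' HY (fun x' H => HL x' (or_intror H))) as [H1 H2].
  change (cat_set (x :: X) Y) with (map (fun y => x ++ y) Y ++ cat_set X Y).
  rewrite length_app, length_map, H2. split; [|lia].
  apply NoDup_app; auto.
  - apply NoDup_map_NoDup_ForallPairs; auto. intros a b _ _ Hab. apply app_inv_head in Hab; auto.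
  - intros w Hw1 Hw2. apply in_map_iff in Hw1; destruct Hw1 as [y [<- Hy]].
    apply in_cat_set in Hw2; destruct Hw2 as [x' [y' [He [Hx' Hy']]]].
    destruct (app_inj_len x y x' y') as [<- _]; auto.
    rewrite (HL x), (HL x'); simpl; auto.
Qed.

Lemma card_cat_set X Y L : (forall x, In x X -> length x = L) -> card (cat_set X Y) = (card X * card Y)%nat.
Proof.
  intros HL. set (d := list_eq_dec Nat.eq_dec).
  rewrite (card_ext _ (cat_set (nodup d X) (nodup d Y))).
  - destruct (cat_set_NoDup (nodup d X) (nodup d Y) L) as [H1 H2]; try apply NoDup_nodup.
    + intros x Hx; apply HL; apply nodup_In in Hx; auto.
    + rewrite card_NoDup by auto. rewrite H2; auto.
  - intros w; rewrite !in_cat_set; split; intros [x [y [-> [Hx Hy]]]]; exists x, y;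
    repeat split; auto; try apply nodup_In; auto; apply nodup_In in Hx; apply nodup_In in Hy; auto.
Qed.

Fixpoint lsum {A} (f : A -> nat) (L : list A) : nat :=
  match L with [] => 0%nat | x :: L' => (f x + lsum f L')%nat end.

Lemma card_flat_map_disj (f : list nat -> list (list nat)) L : NoDup L ->
  (forall u v, In u L -> In v L -> u <> v -> forall w, ~ (In w (f u) /\ In w (f v))) ->
  card (flat_map f L) = lsum (fun u => card (f u)) L.
Proof.
  set (d := list_eq_dec Nat.eq_dec). intros HN HD.
  rewrite (card_ext _ (flat_map (fun u => nodup d (f u)) L)).
  2:{ intros w; rewrite !in_flat_map; split; intros [u [Hu Hw]]; exists u; split; auto;
      [apply nodup_In|apply nodup_In in Hw]; auto. }
  rewrite card_NoDup.
  - clear HD HN. induction L; simpl; auto. rewrite length_app, IHL; auto.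
  - induction L as [|u L IH]; simpl; [constructor|].
    inversion HN; subst. apply NoDup_app; [apply NoDup_nodup| |].
    + apply IH; auto. intros; apply HD; simpl; auto.
    + intros w Hw Hw2. apply in_flat_map in Hw2; destruct Hw2 as [v [Hv Hw2]].
      apply nodup_In in Hw, Hw2. apply (HD u v) with w; simpl; auto.
      intros ->; contradiction.
Qed.

Section Count.
Variable n : nat.
Variable th : rsubst.
Hypothesis Hrs : is_random_subst n th.
Hypothesis Hsc : semi_compatible n th.
Notation M := (subst_matrix th).

Definition NN m c := card (subst_pow th m [c]).
Definition EE m c := ln (INR (NN m c)).

Lemma NN_pos m c : (c < n)%nat -> (1 <= NN m c)%nat.
Proof.
  intros Hc. destruct (subst_pow_nonempty n th Hrs m [c]) as [w Hw].
  - apply Lt_cons; split; auto; apply Lt_nil.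
  - eapply card_In; eauto.
Qed.

Lemma card_subst_pow_cons m a v : (a < n)%nat ->
  card (subst_pow th m (a :: v)) = (NN m a * card (subst_pow th m v))%nat.
Proof.
  intros Ha. unfold NN. rewrite <- (card_cat_set _ _ (lenN n th m a)).
  - apply card_ext; intros w; rewrite in_subst_pow_cons, in_cat_set; tauto.
  - intros x Hx; eapply length_subst_pow_single; eauto.
Qed.

Lemma card_subst_pow_pos m v : Lt n v -> (1 <= card (subst_pow th m v))%nat.
Proof. intros Hv. destruct (subst_pow_nonempty n th Hrs m v Hv) as [w Hw]. eapply card_In; eauto. Qed.

Lemma ln_card_subst_pow m v : Lt n v ->
  ln (INR (card (subst_pow th m v))) = rsum n (fun i => INR (occ i v) * EE m i).
Proof.
  induction v as [|a v IH]; intros Hv.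
  - rewrite subst_pow_nil. unfold card; simpl. rewrite ln_1. symmetry; apply rsum_zero; intros; unfold occ; simpl; lra.
  - apply Lt_cons in Hv; destruct Hv as [Ha Hv].
    rewrite card_subst_pow_cons, mult_INR, ln_mult, IH by (auto; apply lt_0_INR; try apply NN_pos; try apply card_subst_pow_pos; auto).
    rewrite (rsum_ext n (fun i => INR (occ i (a :: v)) * EE m i)
      (fun i => (if Nat.eqb i a then 1 else 0) * EE m i + INR (occ i v) * EE m i)).
    + rewrite rsum_add, rsum_delta; auto.
    + intros i _. unfold occ; simpl. destruct (Nat.eq_dec a i), (Nat.eqb_spec i a); subst; try lia;
      rewrite ?S_INR; lra.
Qed.

Lemma ln_card_th m c u : (c < n)%nat -> In u (th c) ->
  ln (INR (card (subst_pow th m u))) = rsum n (fun i => INR (M i c) * EE m i).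
Proof.
  intros Hc Hu. rewrite ln_card_subst_pow.
  - apply rsum_ext; intros i _. rewrite (occ_th n th Hsc c u i Hc Hu); auto.
  - intros b Hb. exact (proj2 (proj2 (proj2 (Hrs c Hc)) u Hu) b Hb).
Qed.

Lemma EE_identical m c : identical_set_cond n th -> (1 <= m)%nat -> (c < n)%nat ->
  EE (S m) c = rsum n (fun i => INR (M i c) * EE m i).
Proof.
  intros HI Hm Hc. destruct (th_nonempty n th Hrs c Hc) as [u0 Hu0].
  rewrite <- (ln_card_th m c u0) by auto. unfold EE, NN. f_equal; f_equal.
  apply card_ext; intros w. rewrite in_subst_pow_S_single. split.
  - intros [v [Hv Hw]]. apply (HI c Hc m Hm v u0); auto.
  - intros Hw; exists u0; auto.
Qed.

Lemma lsum_const_R {A} (f : A -> nat) L r : (forall x, In x L -> INR (f x) = r) -> INR (lsum f L) = INR (length L) * r.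
Proof.
  induction L; simpl; intros H; [lra|]. rewrite plus_INR, IHL by auto. rewrite H by auto.
  destruct (length L); simpl; [lra|]. lra.
Qed.

Lemma EE_disjoint m c : disjoint_set_cond n th -> (c < n)%nat ->
  EE (S m) c = q1 th c + rsum n (fun i => INR (M i c) * EE m i).
Proof.
  intros HD Hc. unfold EE, NN.
  rewrite (card_ext _ (flat_map (subst_pow th m) (th c))).
  2:{ intros w; rewrite in_subst_pow_S_single, in_flat_map; tauto. }
  rewrite card_flat_map_disj.
  - set (K := rsum n (fun i => INR (M i c) * EE m i)).
    rewrite (lsum_const_R _ _ (exp K)).
    + unfold q1. rewrite ln_mult, ln_exp; auto. 2: apply exp_pos.
      apply lt_0_INR. destruct (th c) eqn:E; simpl; [now destruct (Hrs c Hc)|lia].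
    + intros u Hu. unfold K. rewrite <- (ln_card_th m c u Hc Hu). rewrite exp_ln; auto.
      apply lt_0_INR. apply card_subst_pow_pos. intros b Hb. exact (proj2 (proj2 (proj2 (Hrs c Hc)) u Hu) b Hb).
  - apply (Hrs c Hc).
  - intros u v Hu Hv Huv w [H1 H2]. destruct m.
    + simpl in H1, H2. destruct H1 as [<-|[]], H2 as [->|[]]; auto.
    + apply (HD c Hc (S m) ltac:(lia) u v Hu Hv Huv w); auto.
Qed.

End Count.

Fixpoint rmax (k : nat) (f : nat -> R) : R :=
  match k with O => f O | S k' => Rmax (rmax k' f) (f k') end.
Fixpoint rmin (k : nat) (f : nat -> R) : R :=
  match k with O => f O | S k' => Rmin (rmin k' f) (f k') end.

Lemma rmax_ge k f c : (c < k)%nat -> f c <= rmax k f.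
Proof.
  induction k; simpl; intros Hc; [lia|]. destruct (Nat.eq_dec c k); subst.
  - apply Rmax_r.
  - eapply Rle_trans; [apply IHk; lia|apply Rmax_l].
Qed.
Lemma rmin_le k f c : (c < k)%nat -> rmin k f <= f c.
Proof.
  induction k; simpl; intros Hc; [lia|]. destruct (Nat.eq_dec c k); subst.
  - apply Rmin_r.
  - eapply Rle_trans; [apply Rmin_l|apply IHk; lia].
Qed.
Lemma rmax_att k f : (0 < k)%nat -> exists c, (c < k)%nat /\ rmax k f = f c.
Proof.
  induction k; simpl; intros Hk; [lia|]. destruct k.
  - simpl. exists 0%nat; split; [lia|]. unfold Rmax; destruct Rle_dec; auto.
  - destruct (IHk ltac:(lia)) as [c [Hc Hf]]. unfold Rmax; destruct Rle_dec.
    + exists (S k); split; auto.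
    + exists c; split; auto.
Qed.
Lemma rmin_att k f : (0 < k)%nat -> exists c, (c < k)%nat /\ rmin k f = f c.
Proof.
  induction k; simpl; intros Hk; [lia|]. destruct k.
  - simpl. exists 0%nat; split; [lia|]. unfold Rmin; destruct Rle_dec; auto.
  - destruct (IHk ltac:(lia)) as [c [Hc Hf]]. unfold Rmin; destruct Rle_dec.
    + exists c; split; auto.
    + exists (S k); split; auto.
Qed.

Lemma convex_bounds n w v a b : (forall i, (i < n)%nat -> 0 <= w i) -> rsum n w = 1 ->
  (forall i, (i < n)%nat -> a <= v i <= b) -> a <= rsum n (fun i => w i * v i) <= b.
Proof.
  intros Hw Hs Hv. split.
  - replace a with (rsum n (fun i => w i * a)) by (rewrite rsum_scal_r, Hs; lra).
    apply rsum_le; intros i Hi; specialize (Hv i Hi); specialize (Hw i Hi); nra.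
  - replace b with (rsum n (fun i => w i * b)) by (rewrite rsum_scal_r, Hs; lra).
    apply rsum_le; intros i Hi; specialize (Hv i Hi); specialize (Hw i Hi); nra.
Qed.

Lemma contract_bounds n w v a b d i0 i1 : (forall i, (i < n)%nat -> d <= w i) -> 0 <= d -> rsum n w = 1 ->
  (forall i, (i < n)%nat -> a <= v i <= b) -> (i0 < n)%nat -> v i0 = a -> (i1 < n)%nat -> v i1 = b ->
  a + d * (b - a) <= rsum n (fun i => w i * v i) <= b - d * (b - a).
Proof.
  intros Hw Hd Hs Hv H0 E0 H1 E1. split.
  - assert (rsum n (fun i => w i * v i) = a + rsum n (fun i => w i * (v i - a))) as ->.
    { rewrite (rsum_ext n (fun i => w i * (v i - a)) (fun i => w i * v i + (- a) * w i)) by (intros; ring).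
      rewrite rsum_add, rsum_scal, Hs; ring. }
    assert (w i1 * (v i1 - a) <= rsum n (fun i => w i * (v i - a))).
    { apply (rsum_ge_term n (fun i => w i * (v i - a))); auto.
      intros j Hj; specialize (Hv j Hj); specialize (Hw j Hj); nra. }
    rewrite E1 in H. specialize (Hw i1 H1). specialize (Hv i1 H1). nra.
  - assert (rsum n (fun i => w i * v i) = b - rsum n (fun i => w i * (b - v i))) as ->.
    { rewrite (rsum_ext n (fun i => w i * (b - v i)) (fun i => b * w i + (-1) * (w i * v i))) by (intros; ring).
      rewrite rsum_add, !rsum_scal, Hs; ring. }
    assert (w i0 * (b - v i0) <= rsum n (fun i => w i * (b - v i))).
    { apply (rsum_ge_term n (fun i => w i * (b - v i))); auto.
      intros j Hj; specialize (Hv j Hj); specialize (Hw j Hj); nra. }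
    rewrite E0 in H. specialize (Hw i0 H0). specialize (Hv i0 H0). nra.
Qed.

Section Ratio.
Variable n : nat.
Variable M : nat -> nat -> nat.
Variable lam : R.
Variable Rv : nat -> R.
Hypothesis Hn : (0 < n)%nat.
Hypothesis HPF : PF_pair n M lam Rv.
Hypothesis Hprim : primitive_mx n M.

Definition hom (x : nat -> nat -> R) := forall m c, (c < n)%nat -> x (S m) c = rsum n (fun i => INR (M i c) * x m i).
Definition W (x : nat -> nat -> R) m := rsum n (fun c => Rv c * x m c).

Lemma W_S x m : hom x -> W x (S m) = lam * W x m.
Proof.
  intros Hx. unfold W. rewrite (rsum_ext n (fun c => Rv c * x (S m) c)
    (fun c => rsum n (fun i => x m i * (INR (M i c) * Rv c)))).
  - rewrite rsum_swap, <- rsum_scal. apply rsum_ext; intros i Hi.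
    rewrite rsum_scal, (proj2 (proj2 HPF) i Hi). ring.
  - intros c Hc; rewrite Hx, <- rsum_scal by auto. apply rsum_ext; intros; ring.
Qed.

Lemma W_pow x m : hom x -> W x m = lam ^ m * W x 0.
Proof. intros Hx; induction m; simpl; [ring|]. rewrite W_S, IHm; auto; ring. Qed.

Lemma hom_pow x m k c : hom x -> (c < n)%nat ->
  x (m + k)%nat c = rsum n (fun i => INR (mat_pow n M k i c) * x m i).
Proof.
  intros Hx; revert c; induction k; intros c Hc.
  - simpl. rewrite Nat.add_0_r. rewrite (rsum_ext n _ (fun i => (if Nat.eqb i c then 1 else 0) * x m i)).
    + rewrite rsum_delta; auto.
    + intros i _. destruct (Nat.eqb_spec i c), (Nat.eqb_spec c i); subst; simpl; try lia; auto.
  - replace (m + S k)%nat with (S (m + k)) by lia. rewrite Hx by auto.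
    rewrite (rsum_ext n (fun i => INR (M i c) * x (m + k)%nat i)
      (fun l => rsum n (fun i => INR (mat_pow n M k i l) * INR (M l c) * x m i))).
    + rewrite rsum_swap. apply rsum_ext; intros i _. simpl. rewrite INR_nsum, <- rsum_scal_r.
      apply rsum_ext; intros; rewrite mult_INR; ring.
    + intros l Hl. rewrite IHk, <- rsum_scal by auto. apply rsum_ext; intros; ring.
Qed.

Variable x y : nat -> nat -> R.
Hypothesis Hx : hom x.
Hypothesis Hy : hom y.
Hypothesis Hypos : forall m c, (c < n)%nat -> 0 < y m c.

Definition rr m c := x m c / y m c.
Definition hi m := rmax n (rr m).
Definition lo m := rmin n (rr m).
Definition kap := W x 0 / W y 0.

Lemma rr_step m k c : (c < n)%nat ->
  rr (m + k)%nat c = rsum n (fun i => (INR (mat_pow n M k i c) * y m i / y (m + k)%nat c) * rr m i).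
Proof.
  intros Hc. unfold rr. rewrite (hom_pow x m k c Hx Hc).
  assert (0 < y (m + k)%nat c) by auto.
  rewrite (rsum_ext n (fun i => (INR (mat_pow n M k i c) * y m i / y (m + k)%nat c) * (x m i / y m i))
     (fun i => / y (m+k)%nat c * (INR (mat_pow n M k i c) * x m i))).
  - rewrite rsum_scal. unfold Rdiv; ring.
  - intros i Hi. assert (0 < y m i) by auto. field; split; lra.
Qed.

Lemma weights_sum m k c : (c < n)%nat ->
  rsum n (fun i => INR (mat_pow n M k i c) * y m i / y (m + k)%nat c) = 1.
Proof.
  intros Hc. assert (0 < y (m + k)%nat c) by auto.
  rewrite (rsum_ext n (fun i => INR (mat_pow n M k i c) * y m i / y (m + k)%nat c) (fun i => / y (m+k)%nat c * (INR (mat_pow n M k i c) * y m i))) by (intros; unfold Rdiv; ring).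
  rewrite rsum_scal, <- (hom_pow y m k c Hy Hc). field; lra.
Qed.

Lemma weights_nonneg m k c i : (c < n)%nat -> (i < n)%nat -> 0 <= INR (mat_pow n M k i c) * y m i / y (m + k)%nat c.
Proof.
  intros Hc Hi. assert (0 < y (m + k)%nat c) by auto. assert (0 < y m i) by auto.
  apply Rmult_le_pos; [apply Rmult_le_pos; [apply pos_INR|lra]|left; apply Rinv_0_lt_compat; lra].
Qed.

Lemma rr_bounds m k c : (c < n)%nat -> lo m <= rr (m + k)%nat c <= hi m.
Proof.
  intros Hc. rewrite rr_step by auto. apply convex_bounds.
  - intros; apply weights_nonneg; auto.
  - apply weights_sum; auto.
  - intros i Hi; split; [apply rmin_le|apply rmax_ge]; auto.
Qed.

Lemma hi_mono m k : hi (m + k)%nat <= hi m.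
Proof. destruct (rmax_att n (rr (m + k)%nat) Hn) as [c [Hc E]]. unfold hi at 1; rewrite E. apply rr_bounds; auto. Qed.
Lemma lo_mono m k : lo m <= lo (m + k)%nat.
Proof. destruct (rmin_att n (rr (m + k)%nat) Hn) as [c [Hc E]]. unfold lo at 2; rewrite E. apply rr_bounds; auto. Qed.

Lemma lo_le_hi m : lo m <= hi m.
Proof. unfold lo, hi. apply Rle_trans with (rr m 0%nat); [apply rmin_le|apply rmax_ge]; auto. Qed.

Lemma Wy_pos m : 0 < W y m.
Proof. unfold W; apply rsum_pos; auto. intros c Hc. apply Rmult_lt_0_compat; auto. apply (proj1 HPF); auto. Qed.

Lemma kap_bounds m : lo m <= kap <= hi m.
Proof.
  assert (kap = W x m / W y m) as ->.
  { unfold kap. pose proof (Wy_pos m) as H. rewrite (W_pow y m Hy) in H.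
    rewrite (W_pow x m Hx), (W_pow y m Hy).
    assert (lam ^ m <> 0) by (intros E; rewrite E in H; lra).
    assert (W y 0 <> 0) by (intros E; rewrite E in H; lra).
    field; split; auto. }
  pose proof (Wy_pos m) as H.
  assert (W x m / W y m = rsum n (fun c => (Rv c * y m c / W y m) * rr m c)) as ->.
  { unfold W at 1. rewrite (rsum_ext n (fun c => (Rv c * y m c / W y m) * rr m c) (fun c => / W y m * (Rv c * x m c))).
    - rewrite rsum_scal; unfold Rdiv; ring.
    - intros c Hc; unfold rr. assert (0 < y m c) by auto. field; split; lra. }
  apply convex_bounds.
  - intros i Hi. apply Rmult_le_pos; [apply Rmult_le_pos|left; apply Rinv_0_lt_compat; lra].
    + left; apply (proj1 HPF); auto.
    + left; auto.
  - rewrite (rsum_ext n _ (fun c => / W y m * (Rv c * y m c))) by (intros; unfold Rdiv; ring).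
    rewrite rsum_scal. change (rsum n (fun c => Rv c * y m c)) with (W y m). field; lra.
  - intros i Hi; split; [apply rmin_le|apply rmax_ge]; auto.
Qed.

Lemma rr_near m c : (c < n)%nat -> Rabs (rr m c - kap) <= hi m - lo m.
Proof.
  intros Hc. pose proof (kap_bounds m). pose proof (rr_bounds m 0 c Hc) as H2. rewrite Nat.add_0_r in H2.
  apply Rabs_le; lra.
Qed.

Section Prim.
Variable p : nat.
Hypothesis Hp1 : (1 <= p)%nat.
Hypothesis Hp : forall i j, (i < n)%nat -> (j < n)%nat -> (0 < mat_pow n M p i j)%nat.

Definition KK := rsum n (fun c => rsum n (fun i => INR (mat_pow n M p i c))).

Lemma P_ge1 i c : (i < n)%nat -> (c < n)%nat -> 1 <= INR (mat_pow n M p i c).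
Proof. intros; apply (le_INR 1); apply Hp; auto. Qed.

Lemma KK_ge1 : 1 <= KK.
Proof.
  unfold KK. apply Rle_trans with (rsum n (fun i => INR (mat_pow n M p i 0%nat))).
  - apply Rle_trans with (INR (mat_pow n M p 0%nat 0%nat)); [apply P_ge1; auto|].
    apply (rsum_ge_term n (fun i => INR (mat_pow n M p i 0%nat))); auto. intros; apply pos_INR.
  - apply (rsum_ge_term n (fun c => rsum n (fun i => INR (mat_pow n M p i c)))); auto.
    intros; apply rsum_nonneg; intros; apply pos_INR.
Qed.

Lemma y_upper m c : (c < n)%nat -> y (m + p)%nat c <= KK * rmax n (y m).
Proof.
  intros Hc. rewrite (hom_pow y m p c Hy Hc).
  apply Rle_trans with (rsum n (fun i => INR (mat_pow n M p i c)) * rmax n (y m)).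
  - rewrite <- rsum_scal_r. apply rsum_le; intros i Hi. apply Rmult_le_compat_l; [apply pos_INR|apply rmax_ge; auto].
  - apply Rmult_le_compat_r.
    + apply Rle_trans with (y m 0%nat); [left; auto|apply rmax_ge; auto].
    + unfold KK. apply (rsum_ge_term n (fun c => rsum n (fun i => INR (mat_pow n M p i c)))); auto.
      intros; apply rsum_nonneg; intros; apply pos_INR.
Qed.

Lemma y_lower m i j : (i < n)%nat -> (j < n)%nat -> y m j <= y (m + p)%nat i.
Proof.
  intros Hi Hj. rewrite (hom_pow y m p i Hy Hi).
  apply Rle_trans with (INR (mat_pow n M p j i) * y m j).
  - assert (0 < y m j) by auto. pose proof (P_ge1 j i Hj Hi). nra.
  - apply (rsum_ge_term n (fun l => INR (mat_pow n M p l i) * y m l)); auto.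
    intros l Hl; apply Rmult_le_pos; [apply pos_INR|left; auto].
Qed.

Definition dd := / (2 * KK * KK).

Lemma dd_pos : 0 < dd.
Proof. unfold dd. pose proof KK_ge1. apply Rinv_0_lt_compat. nra. Qed.
Lemma dd_le : dd <= /2.
Proof. unfold dd. pose proof KK_ge1. apply Rinv_le_contravar; nra. Qed.

Lemma weight_lb m c i : (c < n)%nat -> (i < n)%nat ->
  dd <= INR (mat_pow n M p i c) * y (m + p)%nat i / y (m + p + p)%nat c.
Proof.
  intros Hc Hi.
  destruct (rmax_att n (y m) Hn) as [j0 [Hj0 E0]].
  set (Y0 := rmax n (y m)).
  assert (HY0 : 0 < Y0) by (unfold Y0; rewrite E0; auto).
  assert (H1 : Y0 <= y (m + p)%nat i) by (unfold Y0; rewrite E0; apply y_lower; auto).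
  assert (H2 : rmax n (y (m + p)%nat) <= KK * Y0).
  { destruct (rmax_att n (y (m + p)%nat) Hn) as [j1 [Hj1 E1]]. rewrite E1. apply y_upper; auto. }
  assert (H3 : y (m + p + p)%nat c <= KK * (KK * Y0)).
  { eapply Rle_trans; [apply y_upper; auto|]. apply Rmult_le_compat_l; auto. pose proof KK_ge1; lra. }
  pose proof KK_ge1. pose proof (P_ge1 i c Hi Hc).
  assert (0 < y (m + p + p)%nat c) by auto.
  unfold dd. apply Rle_trans with (y (m + p)%nat i / y (m + p + p)%nat c).
  - apply Rle_trans with (Y0 / (KK * (KK * Y0))).
    + replace (Y0 / (KK * (KK * Y0))) with (/ (KK*KK)) by (field; lra). apply Rinv_le_contravar; nra.
    + unfold Rdiv. apply Rmult_le_compat; try lra.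
      * left; apply Rinv_0_lt_compat. nra.
      * apply Rinv_le_contravar; lra.
  - unfold Rdiv. rewrite Rmult_assoc. assert (0 <= y (m+p)%nat i * / y (m + p + p)%nat c).
    { apply Rmult_le_pos; [lra|left; apply Rinv_0_lt_compat; lra]. }
    nra.
Qed.

Lemma contraction m : hi (m + p + p)%nat - lo (m + p + p)%nat <= (1 - 2 * dd) * (hi (m + p)%nat - lo (m + p)%nat).
Proof.
  destruct (rmin_att n (rr (m + p)%nat) Hn) as [i0 [Hi0 E0]].
  destruct (rmax_att n (rr (m + p)%nat) Hn) as [i1 [Hi1 E1]].
  assert (HB : forall c, (c < n)%nat -> lo (m + p)%nat + dd * (hi (m + p)%nat - lo (m + p)%nat) <= rr (m + p + p)%nat c
     <= hi (m + p)%nat - dd * (hi (m + p)%nat - lo (m + p)%nat)).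
  { intros c Hc. rewrite rr_step by auto. apply contract_bounds with i0 i1; auto.
    - intros; apply weight_lb; auto.
    - left; apply dd_pos.
    - apply weights_sum; auto.
    - intros i Hi; split; [apply rmin_le|apply rmax_ge]; auto. }
  destruct (rmin_att n (rr (m + p + p)%nat) Hn) as [c0 [Hc0 F0]].
  destruct (rmax_att n (rr (m + p + p)%nat) Hn) as [c1 [Hc1 F1]].
  unfold hi at 1, lo at 1. rewrite F0, F1.
  pose proof (HB c0 Hc0). pose proof (HB c1 Hc1). lra.
Qed.

Lemma osc_iter j : hi (p + j * p)%nat - lo (p + j * p)%nat <= (1 - 2 * dd) ^ j * (hi p - lo p).
Proof.
  induction j; simpl.
  - rewrite Nat.add_0_r; lra.
  - replace (p + (p + j * p))%nat with (0 + (p + j * p) + p)%nat by lia.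
    pose proof (contraction (0 + j * p)%nat) as H. replace (0 + j * p + p + p)%nat with (0 + (p + j * p) + p)%nat in H by lia.
    replace (0 + j * p + p)%nat with (p + j * p)%nat in H by lia.
    pose proof dd_pos; pose proof dd_le.
    eapply Rle_trans; [apply H|]. rewrite Rmult_assoc. apply Rmult_le_compat_l; lra.
Qed.

Lemma ratio_conv : forall eps, 0 < eps -> exists m0, forall m, (m0 <= m)%nat -> forall c, (c < n)%nat ->
  Rabs (rr m c - kap) <= eps.
Proof.
  intros eps Heps.
  set (D := hi p - lo p). assert (HD : 0 <= D) by (unfold D; pose proof (lo_le_hi p); lra).
  pose proof dd_pos; pose proof dd_le.
  destruct (pow_lt_1_zero (1 - 2 * dd) ltac:(apply Rabs_def1; lra) (eps / (D + 1))) as [j Hj].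
  { apply Rdiv_lt_0_compat; lra. }
  exists (p + j * p)%nat. intros m Hm c Hc.
  eapply Rle_trans; [apply rr_near; auto|].
  replace m with ((p + j * p) + (m - (p + j * p)))%nat by lia.
  pose proof (hi_mono (p + j * p)%nat (m - (p + j * p))). pose proof (lo_mono (p + j * p)%nat (m - (p + j * p))).
  pose proof (osc_iter j). specialize (Hj j (le_n j)).
  assert (0 <= (1 - 2 * dd) ^ j) by (apply pow_le; lra).
  rewrite Rabs_right in Hj by lra.
  assert ((1 - 2 * dd) ^ j * D <= eps / (D + 1) * D) by (apply Rmult_le_compat_r; lra).
  assert (eps / (D + 1) * D <= eps).
  { unfold Rdiv. rewrite Rmult_assoc. rewrite <- (Rmult_1_r eps) at 2. apply Rmult_le_compat_l; [lra|].
    apply Rmult_le_reg_l with (D + 1); [lra|]. rewrite <- Rmult_assoc, Rinv_r; lra. }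
  unfold D in *. lra.
Qed.

End Prim.

End Ratio.

Fixpoint allw (n t : nat) : list (list nat) :=
  match t with
  | O => [ [] ]
  | S t' => flat_map (fun b => map (cons b) (allw n t')) (seq 0 n)
  end.

Lemma in_allw n t w : In w (allw n t) <-> length w = t /\ Lt n w.
Proof.
  revert w; induction t; intros w; simpl.
  - split; [intros [<-|[]]; split; auto; apply Lt_nil|].
    intros [H _]; destruct w; simpl in *; auto; lia.
  - rewrite in_flat_map; split.
    + intros [b [Hb Hw]]. apply in_map_iff in Hw; destruct Hw as [w' [<- Hw']].
      apply IHt in Hw'. apply in_seq in Hb. simpl; split; [lia|]. apply Lt_cons; split; [lia|tauto].
    + intros [Hl Hw]. destruct w as [|b w']; simpl in Hl; [lia|].
      apply Lt_cons in Hw. exists b; split; [apply in_seq; lia|]. apply in_map_iff; exists w'; split; auto.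
      apply IHt; split; [lia|tauto].
Qed.

Lemma length_flat_map_map {A B} (f : A -> list B) L : length (flat_map f L) = fold_right (fun x acc => length (f x) + acc)%nat 0%nat L.
Proof. induction L; simpl; auto. rewrite length_app, IHL; auto. Qed.

Lemma length_allw n t : length (allw n t) = (n ^ t)%nat.
Proof.
  induction t; simpl; auto. rewrite length_flat_map_map.
  assert (forall k s, fold_right (fun x acc => length (map (cons x) (allw n t)) + acc)%nat 0%nat (seq s k) = (k * n ^ t)%nat).
  { induction k; intros s; simpl; auto. rewrite length_map, IHt, IHk; lia. }
  rewrite H; lia.
Qed.

Definition subw (w v : list nat) := subword w v.

Lemma subword_trans u v w : subword u v -> subword v w -> subword u w.
Proof.
  intros [p1 [s1 <-]] [p2 [s2 <-]]. exists (p2 ++ p1), (s1 ++ s2). rewrite <- !app_assoc; auto.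
Qed.
Lemma subword_refl u : subword u u.
Proof. exists [], []; rewrite app_nil_r; auto. Qed.
Lemma subword_firstn l u : subword (firstn l u) u.
Proof. exists [], (skipn l u); simpl; apply firstn_skipn. Qed.
Lemma subword_skipn l u : subword (skipn l u) u.
Proof. exists (firstn l u), []; rewrite app_nil_r; apply firstn_skipn. Qed.

Section Lang.
Variable n : nat.
Variable th : rsubst.
Hypothesis Hrs : is_random_subst n th.
Hypothesis Hsc : semi_compatible n th.

Lemma Lt_subword u v : Lt n v -> subword u v -> Lt n u.
Proof. intros H [p [s <-]] b Hb. apply H. apply in_or_app; right; apply in_or_app; auto. Qed.

Lemma legal_Lt w : in_language n th w -> Lt n w.
Proof.
  intros [a [m [v [Ha [Hv Hs]]]]]. eapply Lt_subword; [|eauto].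
  eapply Lt_subst_pow; eauto. apply Lt_cons; split; auto; apply Lt_nil.
Qed.

Lemma legal_subword u w : in_language n th w -> subword u w -> in_language n th u.
Proof. intros [a [m [v [Ha [Hv Hs]]]]] H. exists a, m, v; repeat split; auto. eapply subword_trans; eauto. Qed.

Lemma legal_pow a m v : (a < n)%nat -> In v (subst_pow th m [a]) -> in_language n th v.
Proof. intros; exists a, m, v; repeat split; auto; apply subword_refl. Qed.

Definition dec_legal (w : list nat) : bool :=
  if excluded_middle_informative (in_language n th w) then true else false.

Definition Lang l := nodup (list_eq_dec Nat.eq_dec) (filter dec_legal (allw n l)).
Definition pl l := length (Lang l).

Lemma in_Lang l w : In w (Lang l) <-> (in_language n th w /\ length w = l).
Proof.
  unfold Lang; rewrite nodup_In, filter_In, in_allw. unfold dec_legal.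
  destruct excluded_middle_informative as [H|H].
  - split; [intros [[? ?] _]; auto|intros [H1 H2]; repeat split; auto; apply legal_Lt; auto].
  - split; [intros [_ Hf]; discriminate|intros [H1 _]; contradiction].
Qed.

Lemma Lang_NoDup l : NoDup (Lang l).
Proof. apply NoDup_nodup. Qed.

Lemma card_lang_pl l : card_lang n th l (pl l).
Proof. exists (Lang l); split; [apply Lang_NoDup|split; [reflexivity|intros w; apply in_Lang]]. Qed.

Lemma card_lang_unique l c : card_lang n th l c -> c = pl l.
Proof.
  intros [L [HN [<- HL]]]. unfold pl. apply Nat.le_antisymm; apply NoDup_incl_length; auto using Lang_NoDup;
  intros w Hw; [apply in_Lang, HL|apply HL, in_Lang]; auto.
Qed.

Lemma pl_le_pow l : (pl l <= n ^ l)%nat.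
Proof.
  rewrite <- length_allw. unfold pl. apply NoDup_incl_length; auto using Lang_NoDup.
  intros w Hw; apply in_Lang in Hw; apply in_allw; split; try tauto. apply legal_Lt; tauto.
Qed.

Lemma pl_submult l k : (pl (l + k) <= pl l * pl k)%nat.
Proof.
  unfold pl. rewrite <- length_prod.
  rewrite <- (length_map (fun w => (firstn l w, skipn l w)) (Lang (l + k))).
  apply NoDup_incl_length.
  - apply NoDup_map_NoDup_ForallPairs; auto using Lang_NoDup.
    intros a b _ _ H. injection H as H1 H2. rewrite <- (firstn_skipn l a), <- (firstn_skipn l b), H1, H2; auto.
  - intros [u v] H. apply in_map_iff in H; destruct H as [w [E Hw]]; injection E as <- <-.
    apply in_Lang in Hw; destruct Hw as [Hw Hl].
    apply in_prod; apply in_Lang; split.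
    + eapply legal_subword; eauto; apply subword_firstn.
    + rewrite length_firstn; lia.
    + eapply legal_subword; eauto; apply subword_skipn.
    + rewrite length_skipn; lia.
Qed.

Lemma NN_le_pl m c : (c < n)%nat -> (NN th m c <= pl (lenN n th m c))%nat.
Proof.
  intros Hc. unfold NN, card, pl. apply NoDup_incl_length; [apply NoDup_nodup|].
  intros w Hw; apply nodup_In in Hw. apply in_Lang; split.
  - eapply legal_pow; eauto.
  - eapply length_subst_pow_single; eauto.
Qed.

End Lang.

Lemma length_flat_map_le_R {A B} (f : A -> list B) L C : (forall x, In x L -> INR (length (f x)) <= C) ->
  INR (length (flat_map f L)) <= INR (length L) * C.
Proof.
  induction L; cbn [flat_map length]; intros H; [simpl; lra|]. rewrite length_app, plus_INR, S_INR.
  assert (INR (length (f a)) <= C) by (apply H; left; auto).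
  assert (INR (length (flat_map f L)) <= INR (length L) * C) by (apply IHL; intros; apply H; right; auto). lra.
Qed.

Lemma length_flat_map_le {A B} (f : A -> list B) L C : (forall x, In x L -> (length (f x) <= C)%nat) ->
  (length (flat_map f L) <= length L * C)%nat.
Proof. induction L; simpl; intros H; auto. rewrite length_app. assert (length (f a) <= C)%nat by auto. specialize (IHL ltac:(auto)). lia. Qed.

Lemma succ_le_pow2 T : (S T <= 2 ^ T)%nat.
Proof. induction T; simpl; lia. Qed.

Section Cover.
Variable n : nat.
Variable th : rsubst.
Hypothesis Hrs : is_random_subst n th.
Hypothesis Hsc : semi_compatible n th.
Variable p : nat.
Hypothesis Hp1 : (1 <= p)%nat.
Hypothesis Hp : forall i j, (i < n)%nat -> (j < n)%nat -> (0 < mat_pow n (subst_matrix th) p i j)%nat.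

Lemma Lt1 a : (a < n)%nat -> Lt n [a].
Proof. intros; apply Lt_cons; split; auto; apply Lt_nil. Qed.

Lemma lift_step j a v : (a < n)%nat -> In v (subst_pow th j [a]) ->
  exists v', In v' (subst_pow th (j + p) [a]) /\ subword v v'.
Proof.
  intros Ha Hv. destruct (subst_pow_nonempty n th Hrs p [a] (Lt1 a Ha)) as [z Hz].
  assert (Hocc : (0 < occ a z)%nat) by (rewrite (occ_subst_pow_single n th Hrs Hsc p a z a Ha Hz); apply Hp; auto).
  assert (Hin : In a z) by (apply (count_occ_In Nat.eq_dec); auto).
  apply in_split in Hin; destruct Hin as [z1 [z2 Ez]].
  assert (Lt n z) as HLz by (eapply Lt_subst_pow; eauto; apply Lt1; auto).
  rewrite Ez in HLz. apply Lt_app in HLz; destruct HLz as [HL1 HL2]. apply Lt_cons in HL2; destruct HL2 as [_ HL2].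
  destruct (subst_pow_nonempty n th Hrs j z1 HL1) as [y1 Hy1].
  destruct (subst_pow_nonempty n th Hrs j z2 HL2) as [y2 Hy2].
  exists (y1 ++ v ++ y2). split.
  - apply in_subst_pow_add. exists z; split; auto. rewrite Ez.
    apply in_subst_pow_app. exists y1, (v ++ y2); split; auto. split; auto.
    apply in_subst_pow_cons. exists v, y2; auto.
  - exists y1, y2; auto.
Qed.

Lemma lift_legal m w : in_language n th w ->
  exists a j x, (a < n)%nat /\ (m <= j)%nat /\ In x (subst_pow th j [a]) /\ subword w x.
Proof.
  intros [a [j0 [v [Ha [Hv Hs]]]]].
  assert (forall t, exists x, In x (subst_pow th (j0 + t * p) [a]) /\ subword w x).
  { induction t.
    - exists v; rewrite Nat.add_0_r; auto.
    - destruct IHt as [x [Hx Hsx]]. destruct (lift_step _ a x Ha Hx) as [x' [Hx' Hs']].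
      exists x'; split; [|eapply subword_trans; eauto].
      replace (j0 + S t * p)%nat with (j0 + t * p + p)%nat by lia. auto. }
  destruct (H m) as [x [Hx Hsx]]. exists a, (j0 + m * p)%nat, x; repeat split; auto. nia.
Qed.

Variable m : nat.
Definition Lmax := nsum n (fun c => lenN n th m c).

Lemma lenN_le_Lmax c : (c < n)%nat -> (lenN n th m c <= Lmax)%nat.
Proof. intros; unfold Lmax; apply (nsum_ge_term n (fun c => lenN n th m c)); auto. Qed.

Lemma trimL w : forall v0 y pre s, Lt n v0 -> In y (subst_pow th m v0) -> pre ++ w ++ s = y ->
  exists v y' pre' s', Lt n v /\ In y' (subst_pow th m v) /\ pre' ++ w ++ s' = y' /\
    (length pre' <= Lmax)%nat /\ (length s' <= length s)%nat.
Proof.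
  induction v0 as [|b v0 IH]; intros y pre s Hv Hy E.
  - rewrite subst_pow_nil in Hy; destruct Hy as [<-|[]].
    exists [], [], pre, s. split; [apply Lt_nil|]. split; [rewrite subst_pow_nil; simpl; auto|].
    split; [auto|]. split; [destruct pre; simpl in *; [lia|discriminate]|lia].
  - apply Lt_cons in Hv; destruct Hv as [Hb Hv].
    apply in_subst_pow_cons in Hy; destruct Hy as [B [y1 [-> [HB Hy1]]]].
    assert (HlB : length B = lenN n th m b) by (eapply length_subst_pow_single; eauto).
    destruct (le_lt_dec (length pre) (length B)) as [Hle|Hgt].
    + exists (b :: v0), (B ++ y1), pre, s. repeat split; auto.
      * apply Lt_cons; auto.
      * apply in_subst_pow_cons; eauto.
      * pose proof (lenN_le_Lmax b Hb); lia.
    + destruct (app_eq_app _ _ _ _ E) as [l [[E1 E2]|[E1 E2]]].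
      * destruct (IH y1 l s Hv Hy1) as [v [y' [pre' [s' H]]]]; [auto|]. exists v, y', pre', s'; auto.
      * subst B. rewrite length_app in Hgt. lia.
Qed.

Lemma trimR w : forall v0 y pre s, Lt n v0 -> In y (subst_pow th m v0) -> pre ++ w ++ s = y ->
  exists v y' pre' s', Lt n v /\ In y' (subst_pow th m v) /\ pre' ++ w ++ s' = y' /\
    (length s' <= Lmax)%nat /\ (length pre' <= length pre)%nat.
Proof.
  induction v0 as [|b v0 IH] using rev_ind; intros y pre s Hv Hy E.
  - rewrite subst_pow_nil in Hy; destruct Hy as [<-|[]].
    exists [], [], pre, s. split; [apply Lt_nil|]. split; [rewrite subst_pow_nil; simpl; auto|].
    split; [auto|]. split; [|lia]. destruct s; [simpl; lia|]. destruct pre; destruct w; simpl in *; discriminate.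
  - apply Lt_app in Hv; destruct Hv as [Hv Hb]. apply Lt_cons in Hb; destruct Hb as [Hb _].
    apply in_subst_pow_app in Hy; destruct Hy as [y1 [B [-> [Hy1 HB]]]].
    assert (HlB : length B = lenN n th m b) by (eapply length_subst_pow_single; eauto).
    destruct (le_lt_dec (length s) (length B)) as [Hle|Hgt].
    + exists (v0 ++ [b]), (y1 ++ B), pre, s. repeat split; auto.
      * apply Lt_app; split; auto. apply Lt1; auto.
      * apply in_subst_pow_app; eauto.
      * pose proof (lenN_le_Lmax b Hb); lia.
    + rewrite app_assoc in E. destruct (app_eq_app _ _ _ _ E) as [l [[E1 E2]|[E1 E2]]].
      * subst B. rewrite length_app in Hgt. lia.
      * rewrite <- app_assoc in E1.
        destruct (IH y1 pre l Hv Hy1) as [v [y' [pre' [s' H]]]]; [auto|]. exists v, y', pre', s'; auto.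
Qed.

Lemma cover w : in_language n th w ->
  exists v y o, Lt n v /\ In y (subst_pow th m v) /\ (o <= Lmax)%nat /\
    (lenv n th m v <= length w + 2 * Lmax)%nat /\ w = firstn (length w) (skipn o y).
Proof.
  intros Hw. destruct (lift_legal m w Hw) as [a [j [x [Ha [Hj [Hx [pre [s E]]]]]]]].
  replace j with (m + (j - m))%nat in Hx by lia.
  apply in_subst_pow_add in Hx; destruct Hx as [v0 [Hv0 Hx]].
  assert (HL0 : Lt n v0) by (eapply Lt_subst_pow; eauto; apply Lt1; auto).
  destruct (trimL w v0 x pre s HL0 Hx E) as [v1 [y1 [pre1 [s1 [HL1 [Hy1 [E1 [Hp1' _]]]]]]]].
  destruct (trimR w v1 y1 pre1 s1 HL1 Hy1 E1) as [v2 [y2 [pre2 [s2 [HL2 [Hy2 [E2 [Hs2 Hp2]]]]]]]].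
  exists v2, y2, (length pre2). repeat split; auto.
  - lia.
  - rewrite <- (length_subst_pow n th Hrs Hsc m v2 y2 HL2 Hy2), <- E2, !length_app. lia.
  - rewrite <- E2. rewrite skipn_app, skipn_all, Nat.sub_diag; simpl.
    rewrite firstn_app, firstn_all, Nat.sub_diag; simpl. rewrite app_nil_r; auto.
Qed.

Lemma card_pow_bound beta v : (forall c, (c < n)%nat -> EE th m c <= beta * INR (lenN n th m c)) -> Lt n v ->
  INR (card (subst_pow th m v)) <= exp (beta * INR (lenv n th m v)).
Proof.
  intros HE; induction v as [|a v IH]; intros Hv.
  - rewrite subst_pow_nil; unfold card; simpl. rewrite Rmult_0_r, exp_0; lra.
  - apply Lt_cons in Hv; destruct Hv as [Ha Hv].
    rewrite (card_subst_pow_cons n th Hrs Hsc m a v Ha). simpl lenv. rewrite mult_INR, plus_INR, Rmult_plus_distr_l, exp_plus.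
    apply Rmult_le_compat; try apply pos_INR; auto.
    rewrite <- (exp_ln (INR (NN th m a))). 2: apply lt_0_INR; apply (NN_pos n th Hrs); auto.
    destruct (Rle_lt_or_eq_dec _ _ (HE a Ha)) as [H|H]; [left; apply exp_increasing; auto|right; unfold EE in H; rewrite H; auto].
Qed.

Lemma lenv_lb B v : (forall c, (c < n)%nat -> (B <= lenN n th m c)%nat) -> Lt n v -> (B * length v <= lenv n th m v)%nat.
Proof.
  intros HB; induction v as [|a v IH]; intros Hv; simpl; [lia|].
  apply Lt_cons in Hv; destruct Hv as [Ha Hv]. specialize (IH Hv). specialize (HB a Ha). nia.
Qed.

Lemma pl_upper k B beta : (1 <= n)%nat -> (1 <= B)%nat -> (forall c, (c < n)%nat -> (B <= lenN n th m c)%nat) -> 0 <= beta ->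
  (forall c, (c < n)%nat -> EE th m c <= beta * INR (lenN n th m c)) ->
  INR (pl n th k) <= INR (2 * n) ^ ((k + 2 * Lmax) / B) * (INR (S Lmax) * exp (beta * INR (k + 2 * Lmax))).
Proof.
  intros Hn HB1 HB Hb HE.
  set (T := ((k + 2 * Lmax) / B)%nat).
  set (Vs := filter (fun v => Nat.leb (lenv n th m v) (k + 2 * Lmax)) (flat_map (allw n) (seq 0 (S T)))).
  set (Cand := flat_map (fun v => flat_map (fun y => map (fun o => firstn k (skipn o y)) (seq 0 (S Lmax)))
                   (nodup (list_eq_dec Nat.eq_dec) (subst_pow th m v))) Vs).
  assert (Hinc : (pl n th k <= length Cand)%nat).
  { unfold pl. apply NoDup_incl_length; [apply Lang_NoDup|]. intros w Hw. apply (in_Lang n th Hrs) in Hw; destruct Hw as [Hw Hk].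
    destruct (cover w Hw) as [v [y [o [Hv [Hy [Ho [Hl Ew]]]]]]].
    apply in_flat_map. exists v; split.
    - apply filter_In; split; [|apply Nat.leb_le; lia].
      apply in_flat_map; exists (length v); split; [|apply in_allw; auto].
      apply in_seq. split; [lia|]. simpl. assert (length v <= T)%nat; [|lia].
      unfold T. apply Nat.div_le_lower_bound; [lia|]. pose proof (lenv_lb B v HB Hv). lia.
    - apply in_flat_map; exists y; split; [apply nodup_In; auto|]. apply in_map_iff; exists o; split.
      + symmetry. rewrite Ew at 1. rewrite Hk; auto.
      + apply in_seq; lia. }
  apply Rle_trans with (INR (length Cand)); [apply le_INR; auto|].
  assert (HV : INR (length Vs) <= INR (2 * n) ^ T).
  { apply Rle_trans with (INR (S T * n ^ T)).
    - apply le_INR. eapply Nat.le_trans; [apply filter_length_le|].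
      eapply Nat.le_trans; [apply (length_flat_map_le _ _ (n ^ T))|].
      + intros t Ht. apply in_seq in Ht. rewrite length_allw. apply Nat.pow_le_mono_r; lia.
      + rewrite length_seq; lia.
    - rewrite <- pow_INR. apply le_INR. rewrite Nat.pow_mul_l. apply Nat.mul_le_mono_r. apply succ_le_pow2. }
  unfold Cand. eapply Rle_trans; [apply (length_flat_map_le_R _ _ (INR (S Lmax) * exp (beta * INR (k + 2 * Lmax))))|].
  - intros v Hv. apply filter_In in Hv; destruct Hv as [Hv Hl]. apply Nat.leb_le in Hl.
    apply in_flat_map in Hv; destruct Hv as [t [_ Hv]]. apply in_allw in Hv; destruct Hv as [_ Hv].
    eapply Rle_trans; [apply (length_flat_map_le_R _ _ (INR (S Lmax)))|].
    + intros y _. rewrite length_map, length_seq. lra.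
    + rewrite Rmult_comm. apply Rmult_le_compat_l; [apply pos_INR|].
      eapply Rle_trans; [apply card_pow_bound; auto|].
      destruct (Rle_lt_or_eq_dec _ _ (Rmult_le_compat_l beta _ _ Hb (le_INR _ _ Hl))) as [H|H];
        [left; apply exp_increasing; auto|right; rewrite H; auto].
  - apply Rmult_le_compat_r; auto. apply Rmult_le_pos; [apply pos_INR|left; apply exp_pos].
Qed.

End Cover.

Lemma Rabs_le_bet z e : Rabs z <= e -> - e <= z <= e.
Proof. unfold Rabs; destruct (Rcase_abs z); intros; lra. Qed.

Lemma rsum_shift m f : rsum (S m) f = f 0%nat + rsum m (fun j => f (S j)).
Proof. induction m; simpl in *; [lra|]. rewrite IHm; lra. Qed.

Lemma bernoulli mu k : 1 <= mu -> 1 + INR k * (mu - 1) <= mu ^ k.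
Proof.
  intros H; induction k; [simpl; lra|]. rewrite S_INR. cbn [pow].
  assert (0 <= mu ^ k) by (apply pow_le; lra). pose proof (pos_INR k). assert (0 <= INR k * (mu - 1) * (mu - 1)) by (apply Rmult_le_pos; [apply Rmult_le_pos|]; lra). nra.
Qed.

Lemma cesaro_up (E H L : nat -> R) a eta lam B J :
  (forall m, (J <= m)%nat -> E (S m) = E m + H m) ->
  (forall j, (J <= j)%nat -> H j <= (a + eta) * L j) ->
  (forall j, (J <= j)%nat -> (lam - eta) * L j <= L (S j)) ->
  (forall j, 0 < L j) -> 0 <= B -> a + eta <= B * (lam - eta - 1) ->
  forall m, (J <= m)%nat -> E m - E J <= B * L m.
Proof.
  intros HE HH HL Hpos HB Hab m Hm. induction Hm.
  - pose proof (Hpos J); nra.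
  - rewrite HE by lia. specialize (HH m Hm). specialize (HL m Hm). pose proof (Hpos m). nra.
Qed.

Lemma cesaro_lo (E H L : nat -> R) a eta lam B J :
  (forall m, (J <= m)%nat -> E (S m) = E m + H m) ->
  (forall j, (J <= j)%nat -> (a - eta) * L j <= H j) ->
  (forall j, (J <= j)%nat -> L (S j) <= (lam + eta) * L j) ->
  (forall j, 0 < L j) -> 0 <= B -> B * (lam + eta - 1) <= a - eta ->
  forall m, (J <= m)%nat -> B * (L m - L J) <= E m - E J.
Proof.
  intros HE HH HL Hpos HB Hab m Hm. induction Hm.
  - nra.
  - rewrite HE by lia. specialize (HH m Hm). specialize (HL m Hm). pose proof (Hpos m). nra.
Qed.

Section PerLetter.
Variable n : nat.
Variable th : rsubst.
Hypothesis Hn : (0 < n)%nat.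
Hypothesis Hrs : is_random_subst n th.
Hypothesis Hsc : semi_compatible n th.
Variable lam : R.
Variable Rv : nat -> R.
Hypothesis HPF : PF_pair n (subst_matrix th) lam Rv.
Variable p : nat.
Hypothesis Hp1 : (1 <= p)%nat.
Hypothesis Hp : forall i j, (i < n)%nat -> (j < n)%nat -> (0 < mat_pow n (subst_matrix th) p i j)%nat.

Notation M := (subst_matrix th).
Definition Lr m c := INR (lenN n th m c).
Definition Vg (v : nat -> R) j c := rsum n (fun i => INR (mat_pow n M j i c) * v i).

Lemma hom_Vg v : hom n M (Vg v).
Proof.
  intros m c Hc. unfold Vg. simpl.
  rewrite (rsum_ext n (fun i => INR (M i c) * rsum n (fun i0 => INR (mat_pow n M m i0 i) * v i0))
    (fun l => rsum n (fun i => INR (mat_pow n M m i l) * INR (M l c) * v i))).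
  - rewrite rsum_swap. apply rsum_ext; intros i _. rewrite INR_nsum, <- rsum_scal_r.
    apply rsum_ext; intros; rewrite mult_INR; ring.
  - intros l Hl. rewrite <- rsum_scal. apply rsum_ext; intros; ring.
Qed.

Lemma Vg0 v c : (c < n)%nat -> Vg v 0 c = v c.
Proof.
  intros Hc. unfold Vg. simpl. rewrite <- (rsum_delta n c v Hc). apply rsum_ext; intros i _.
  destruct (Nat.eqb_spec i c), (Nat.eqb_spec c i); subst; simpl; try lia; ring.
Qed.

Lemma hom_Lr : hom n M Lr.
Proof.
  intros m c Hc. unfold Lr. rewrite lenN_S, INR_nsum. apply rsum_ext; intros; rewrite mult_INR; auto.
Qed.

Lemma lenN_0 c : (c < n)%nat -> lenN n th 0 c = 1%nat.
Proof.
  intros Hc. unfold lenN; cbn [mat_pow]. rewrite (nsum_ext n (fun b => if Nat.eqb b c then 1 else 0)%nat (fun b => (fun _ => 1) b * (if Nat.eqb b c then 1 else 0))%nat).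
  - rewrite nsum_delta'. destruct (Nat.ltb_spec c n); lia.
  - intros; lia.
Qed.

Lemma lenN_ge1 m c : (c < n)%nat -> (1 <= lenN n th m c)%nat.
Proof.
  revert c; induction m; intros c Hc.
  - rewrite lenN_0; auto.
  - rewrite lenN_S. destruct (th_nonempty n th Hrs c Hc) as [x Hx].
    destruct x as [|b x].
    + exfalso. destruct (proj2 (proj2 (Hrs c Hc)) [] Hx) as [H _]; auto.
    + assert (Hb : (b < n)%nat) by (apply (proj2 (proj2 (Hrs c Hc)) (b :: x) Hx); simpl; auto).
      assert (HM : (1 <= M b c)%nat).
      { rewrite <- (occ_th n th Hsc c (b :: x) b Hc Hx). unfold occ; simpl. destruct (Nat.eq_dec b b); lia. }
      eapply Nat.le_trans; [|apply (nsum_ge_term n (fun i => M i c * lenN n th m i)%nat b Hb)].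
      specialize (IHm b Hb). nia.
Qed.

Lemma Lr_pos m c : (c < n)%nat -> 1 <= Lr m c.
Proof. intros Hc; unfold Lr; apply (le_INR 1); apply lenN_ge1; auto. Qed.

Lemma W_Lr0 : W n Rv Lr 0 = 1.
Proof.
  unfold W. rewrite <- (proj1 (proj2 HPF)). apply rsum_ext; intros c Hc. unfold Lr; rewrite lenN_0; simpl; auto; ring.
Qed.

Lemma conv_gen (x y : nat -> nat -> R) : hom n M x -> hom n M y -> (forall m c, (c < n)%nat -> 0 < y m c) ->
  forall eps, 0 < eps -> exists m0, forall m, (m0 <= m)%nat -> forall c, (c < n)%nat ->
  (W n Rv x 0 / W n Rv y 0 - eps) * y m c <= x m c <= (W n Rv x 0 / W n Rv y 0 + eps) * y m c.
Proof.
  intros Hx Hy Hyp eps Heps.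
  destruct (ratio_conv n M lam Rv Hn HPF x y Hx Hy Hyp p Hp1 Hp eps Heps) as [m0 Hm0].
  exists m0. intros m Hm c Hc. specialize (Hm0 m Hm c Hc). unfold rr, kap in Hm0.
  apply Rabs_le_bet in Hm0. pose proof (Hyp m c Hc).
  set (k := W n Rv x 0 / W n Rv y 0) in *.
  assert (x m c = (x m c / y m c) * y m c) by (field; lra). split; nra.
Qed.

Lemma Lr_growth : 1 < lam -> forall B, exists m1, forall m, (m1 <= m)%nat -> forall c, (c < n)%nat -> B <= Lr m c.
Proof.
  intros Hl B.
  assert (Hx : hom n M (fun m c => Lr (S m) c)) by (intros m c Hc; apply hom_Lr; auto).
  destruct (conv_gen (fun m c => Lr (S m) c) Lr Hx hom_Lr (fun m c Hc => Rlt_le_trans _ _ _ Rlt_0_1 (Lr_pos m c Hc))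
     ((lam - 1) / 2) ltac:(lra)) as [J HJ].
  assert (Hk : W n Rv (fun m c => Lr (S m) c) 0 / W n Rv Lr 0 = lam).
  { rewrite W_Lr0. change (W n Rv (fun m c => Lr (S m) c) 0) with (W n Rv Lr 1).
    rewrite (W_S n M lam Rv HPF Lr 0 hom_Lr), W_Lr0. field. }
  rewrite Hk in HJ. set (mu := lam - (lam - 1) / 2).
  assert (Hgr : forall k c, (c < n)%nat -> mu ^ k <= Lr (J + k)%nat c).
  { induction k; intros c Hc.
    - simpl. rewrite Nat.add_0_r. apply Lr_pos; auto.
    - replace (J + S k)%nat with (S (J + k)) by lia. simpl.
      destruct (HJ (J + k)%nat ltac:(lia) c Hc) as [H1 _]. specialize (IHk c Hc).
      assert (0 <= mu ^ k) by (apply pow_le; unfold mu; lra). unfold mu in *. nra. }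
  destruct (INR_unbounded (Rabs B / (mu - 1))) as [K HK].
  exists (J + K)%nat. intros m Hm c Hc.
  replace m with (J + (m - J))%nat by lia. eapply Rle_trans; [|apply Hgr; auto].
  eapply Rle_trans; [|apply bernoulli; unfold mu; lra].
  assert (INR K <= INR (m - J)) by (apply le_INR; lia).
  assert (0 < mu - 1) by (unfold mu; lra).
  assert (Rabs B / (mu - 1) * (mu - 1) = Rabs B) by (field; lra).
  assert (B <= Rabs B) by apply RRle_abs.
  assert (Rabs B / (mu - 1) * (mu - 1) <= INR (m - J) * (mu - 1)) by (apply Rmult_le_compat_r; lra). lra.
Qed.

End PerLetter.

Lemma ln_le_mono x y : 0 < x -> x <= y -> ln x <= ln y.
Proof. intros Hx Hxy. destruct (Rle_lt_or_eq_dec _ _ Hxy) as [H|<-]; [left; apply ln_increasing; auto|lra]. Qed.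
Lemma ln_nonneg_nat k : (1 <= k)%nat -> 0 <= ln (INR k).
Proof. intros H. rewrite <- ln_1. apply ln_le_mono; [lra|]. apply (le_INR 1); auto. Qed.

Section PL.
Variable n : nat.
Variable th : rsubst.
Hypothesis Hn : (0 < n)%nat.
Hypothesis Hrs : is_random_subst n th.
Hypothesis Hsc : semi_compatible n th.
Variable lam : R.
Variable Rv : nat -> R.
Hypothesis HPF : PF_pair n (subst_matrix th) lam Rv.
Variable p : nat.
Hypothesis Hp1 : (1 <= p)%nat.
Hypothesis Hp : forall i j, (i < n)%nat -> (j < n)%nat -> (0 < mat_pow n (subst_matrix th) p i j)%nat.
Notation M := (subst_matrix th).
Notation Lr := (Lr n th).

Definition PL rho := forall eps, 0 < eps -> exists m0, forall m, (m0 <= m)%nat -> forall c, (c < n)%nat ->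
  (rho - eps) * Lr m c <= EE th m c <= (rho + eps) * Lr m c.

Lemma EE_nonneg m c : (c < n)%nat -> 0 <= EE th m c.
Proof. intros; unfold EE; apply ln_nonneg_nat; apply (NN_pos n th Hrs); auto. Qed.

Lemma q1_nonneg c : (c < n)%nat -> 0 <= q1 th c.
Proof. intros Hc; unfold q1; apply ln_nonneg_nat. destruct (th c) eqn:E; simpl; [now destruct (Hrs c Hc)|lia]. Qed.

Lemma EE0 c : EE th 0 c = 0.
Proof. unfold EE, NN, card; simpl. apply ln_1. Qed.

Lemma EE1 c : (c < n)%nat -> EE th 1 c = q1 th c.
Proof.
  intros Hc. unfold EE, NN, q1. f_equal. f_equal.
  rewrite (card_ext _ (th c)). 2:{ intros w; rewrite in_subst_pow_S_single; simpl; split;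
    [intros [v [Hv [<-|[]]]]; auto|intros H; exists w; auto]. }
  apply card_NoDup. apply (Hrs c Hc).
Qed.

Lemma a_nonneg : 0 <= rsum n (fun i => q1 th i * Rv i).
Proof. apply rsum_nonneg; intros i Hi. apply Rmult_le_pos; [apply q1_nonneg; auto|left; apply (proj1 HPF); auto]. Qed.


Lemma Wq : W n Rv (Vg n th (q1 th)) 0 = rsum n (fun i => q1 th i * Rv i).
Proof. unfold W. apply rsum_ext; intros c Hc. rewrite (Vg0 n th Hn p Hp1); auto; ring. Qed.

Lemma W_Lr1 : W n Rv (fun m c => Lr (S m) c) 0 = lam.
Proof.
  change (W n Rv (fun m c => Lr (S m) c) 0) with (W n Rv Lr 1).
  rewrite (W_S n M lam Rv HPF Lr 0 (hom_Lr n th)), (W_Lr0 n th Hn lam Rv HPF p Hp1). ring.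
Qed.

Lemma Lr_pos' m c : (c < n)%nat -> 0 < Lr m c.
Proof. intros; eapply Rlt_le_trans; [apply Rlt_0_1|apply (Lr_pos n th Hn Hrs Hsc p Hp1); auto]. Qed.

Lemma PL_identical : identical_set_cond n th -> PL (/ lam * rsum n (fun i => q1 th i * Rv i)).
Proof.
  intros HI eps Heps.
  assert (Hx : hom n M (fun m c => EE th (S m) c)).
  { intros m c Hc. apply (EE_identical n th Hrs Hsc); auto; lia. }
  assert (Hy : hom n M (fun m c => Lr (S m) c)) by (intros m c Hc; apply hom_Lr; auto).
  destruct (conv_gen n th Hn lam Rv HPF p Hp1 Hp _ _ Hx Hy (fun m c Hc => Lr_pos' (S m) c Hc) eps Heps) as [m0 Hm0].
  assert (E : W n Rv (fun m c => EE th (S m) c) 0 / W n Rv (fun m c => Lr (S m) c) 0 = / lam * rsum n (fun i => q1 th i * Rv i)).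
  { rewrite W_Lr1. unfold W. rewrite (rsum_ext n (fun c => Rv c * EE th 1 c) (fun i => q1 th i * Rv i)).
    - unfold Rdiv; ring.
    - intros c Hc; rewrite EE1; auto; ring. }
  rewrite E in Hm0. exists (S m0). intros m Hm c Hc. destruct m as [|m]; [lia|].
  apply (Hm0 m ltac:(try unfold J in *; lia) c Hc).
Qed.

Lemma EE_sum : disjoint_set_cond n th -> forall m c, (c < n)%nat -> EE th m c = rsum m (fun j => Vg n th (q1 th) j c).
Proof.
  intros HD m. induction m; intros c Hc.
  - rewrite EE0; simpl; auto.
  - rewrite (EE_disjoint n th Hrs Hsc m c HD Hc), rsum_shift, (Vg0 n th Hn p Hp1) by auto. f_equal.
    rewrite (rsum_ext n (fun i => INR (M i c) * EE th m i) (fun i => rsum m (fun j => INR (M i c) * Vg n th (q1 th) j i))).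
    + rewrite rsum_swap. apply rsum_ext; intros j _. rewrite (hom_Vg n th (q1 th) j c Hc). auto.
    + intros i Hi; rewrite IHm, <- rsum_scal; auto.
Qed.

Lemma PL_disjoint : disjoint_set_cond n th -> 1 < lam -> PL (/ (lam - 1) * rsum n (fun i => q1 th i * Rv i)).
Proof.
  intros HD Hl eps Heps.
  set (a := rsum n (fun i => q1 th i * Rv i)). set (d := lam - 1). set (rho := / d * a).
  assert (Hd : 0 < d) by (unfold d; lra).
  assert (Ha : 0 <= a) by apply a_nonneg.
  assert (Hrho : 0 <= rho) by (unfold rho; apply Rmult_le_pos; [left; apply Rinv_0_lt_compat|]; lra).
  assert (Hard : a = rho * d) by (unfold rho; field; lra).
  set (eta := Rmin (d / 2) (eps * d / (4 * (1 + rho)))).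
  assert (He1 : eta <= d / 2) by apply Rmin_l.
  assert (He2 : eta <= eps * d / (4 * (1 + rho))) by apply Rmin_r.
  assert (He0 : 0 < eta).
  { unfold eta. apply Rmin_glb_lt; [lra|]. apply Rdiv_lt_0_compat; [nra|lra]. }
  assert (He3 : eta * (1 + rho) <= eps * d / 4).
  { replace (eps * d / 4) with (eps * d / (4 * (1 + rho)) * (1 + rho)) by (field; lra).
    apply Rmult_le_compat_r; lra. }
  assert (HxH : hom n M (Vg n th (q1 th))) by apply hom_Vg.
  destruct (conv_gen n th Hn lam Rv HPF p Hp1 Hp _ _ HxH (hom_Lr n th) (fun m c Hc => Lr_pos' m c Hc) eta He0) as [J1 HJ1].
  rewrite Wq, (W_Lr0 n th Hn lam Rv HPF p Hp1) in HJ1. replace (rsum n (fun i => q1 th i * Rv i) / 1) with a in HJ1 by (unfold a, Rdiv; field).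
  assert (Hy : hom n M (fun m c => Lr (S m) c)) by (intros m c Hc; apply hom_Lr; auto).
  destruct (conv_gen n th Hn lam Rv HPF p Hp1 Hp _ _ Hy (hom_Lr n th) (fun m c Hc => Lr_pos' m c Hc) eta He0) as [J2 HJ2].
  rewrite W_Lr1, (W_Lr0 n th Hn lam Rv HPF p Hp1) in HJ2. replace (lam / 1) with lam in HJ2 by (unfold Rdiv; field).
  set (J := Nat.max J1 J2).
  set (C := rmax n (fun c => EE th J c + rho * Lr J c)).
  assert (HC : forall c, (c < n)%nat -> EE th J c + rho * Lr J c <= C) by (intros; apply (rmax_ge n (fun c => EE th J c + rho * Lr J c)); auto).
  destruct (Lr_growth n th Hn Hrs Hsc lam Rv HPF p Hp1 Hp Hl (2 * Rabs C / eps)) as [m1 Hm1].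
  exists (Nat.max J m1). intros m Hm c Hc.
  assert (HE : forall k, (J <= k)%nat -> EE th (S k) c = EE th k c + Vg n th (q1 th) k c).
  { intros k _. rewrite !(EE_sum HD) by auto. simpl; auto. }
  assert (HLm : 2 * Rabs C / eps <= Lr m c) by (apply Hm1; auto; unfold J in *; lia).
  assert (HCm : C <= eps / 2 * Lr m c).
  { assert (C <= Rabs C) by apply RRle_abs.
    assert (2 * Rabs C / eps * (eps / 2) = Rabs C) by (field; lra).
    assert (2 * Rabs C / eps * (eps / 2) <= Lr m c * (eps / 2)) by (apply Rmult_le_compat_r; lra). lra. }
  pose proof (HC c Hc) as HCc. pose proof (EE_nonneg J c Hc). pose proof (Lr_pos' J c Hc). pose proof (Lr_pos' m c Hc).
  split.
  - destruct (Rle_lt_dec 0 (rho - eps / 2)) as [Hpos|Hneg].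
    + assert (Hlo : (rho - eps / 2) * (Lr m c - Lr J c) <= EE th m c - EE th J c).
      { apply (cesaro_lo (fun k => EE th k c) (fun k => Vg n th (q1 th) k c) (fun k => Lr k c) a eta lam (rho - eps / 2) J); auto.
        - intros j Hj; cbv beta. destruct (HJ1 j ltac:(try unfold J in *; lia) c Hc); lra.
        - intros j Hj; cbv beta. destruct (HJ2 j ltac:(try unfold J in *; lia) c Hc); lra.
        - intros; apply Lr_pos'; auto.
        - replace (lam + eta - 1) with (d + eta) by (unfold d; ring). nra.
        - lia. }
      assert ((rho - eps / 2) * Lr J c <= rho * Lr J c) by nra. nra.
    + assert (0 <= EE th m c) by (apply EE_nonneg; auto). nra.
  - assert (Hup : EE th m c - EE th J c <= (rho + eps / 2) * Lr m c).
    { apply (cesaro_up (fun k => EE th k c) (fun k => Vg n th (q1 th) k c) (fun k => Lr k c) a eta lam (rho + eps / 2) J); auto.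
      - intros j Hj; cbv beta. destruct (HJ1 j ltac:(try unfold J in *; lia) c Hc); lra.
      - intros j Hj; cbv beta. destruct (HJ2 j ltac:(try unfold J in *; lia) c Hc); lra.
      - intros; apply Lr_pos'; auto.
      - lra.
      - replace (lam - eta - 1) with (d - eta) by (unfold d; ring). nra.
      - lia. }
    assert (0 <= rho * Lr J c) by nra. nra.
Qed.

End PL.

Section Entropy.
Variable n : nat.
Variable th : rsubst.
Hypothesis Hn : (0 < n)%nat.
Hypothesis Hrs : is_random_subst n th.
Hypothesis Hsc : semi_compatible n th.
Variable lam : R.
Variable Rv : nat -> R.
Hypothesis HPF : PF_pair n (subst_matrix th) lam Rv.
Variable p : nat.
Hypothesis Hp1 : (1 <= p)%nat.
Hypothesis Hp : forall i j, (i < n)%nat -> (j < n)%nat -> (0 < mat_pow n (subst_matrix th) p i j)%nat.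
Hypothesis Hlam : 1 < lam.
Variable rho : R.
Hypothesis Hrho : 0 <= rho.
Hypothesis HPL : PL n th rho.

Definition aa l := ln (INR (pl n th l)).

Lemma pl_pos l : (1 <= pl n th l)%nat.
Proof.
  destruct (Lr_growth n th Hn Hrs Hsc lam Rv HPF p Hp1 Hp Hlam (INR l)) as [m Hm].
  specialize (Hm m (le_n m) 0%nat Hn). unfold Lr in Hm. apply INR_le in Hm.
  destruct (subst_pow_nonempty n th Hrs m [0%nat] (Lt1 n 0 Hn)) as [x Hx].
  assert (length x = lenN n th m 0) by (eapply length_subst_pow_single; eauto).
  unfold pl. destruct (Lang n th l) eqn:E; simpl; [|lia].
  assert (In (firstn l x) (Lang n th l)).
  { apply (in_Lang n th Hrs). split.
    - eapply legal_subword; [eapply legal_pow; eauto|apply subword_firstn].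
    - rewrite length_firstn; lia. }
  rewrite E in H0; destruct H0.
Qed.

Lemma aa_nonneg l : 0 <= aa l.
Proof. apply ln_nonneg_nat, pl_pos. Qed.

Lemma INR_pl_pos l : 0 < INR (pl n th l).
Proof. apply lt_0_INR; pose proof (pl_pos l); lia. Qed.

Lemma aa_sub l k : aa (l + k) <= aa l + aa k.
Proof.
  unfold aa. rewrite <- ln_mult by apply INR_pl_pos. apply ln_le_mono; [apply INR_pl_pos|].
  rewrite <- mult_INR. apply le_INR, pl_submult; auto.
Qed.

Lemma aa_mult q l r : aa (q * l + r) <= INR q * aa l + aa r.
Proof.
  induction q; [simpl; pose proof (aa_nonneg r); lra|]. cbn [Nat.mul]. replace (l + q * l + r)%nat with (l + (q * l + r))%nat by lia.
  eapply Rle_trans; [apply aa_sub|]. rewrite S_INR. lra.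
Qed.

Lemma ln_n_nonneg : 0 <= ln (INR n).
Proof. apply ln_nonneg_nat; lia. Qed.

Lemma aa_small r : aa r <= INR r * ln (INR n).
Proof.
  unfold aa. rewrite <- ln_pow by (apply lt_0_INR; lia). apply ln_le_mono; [apply INR_pl_pos|].
  rewrite <- pow_INR. apply le_INR, pl_le_pow; auto.
Qed.

Lemma aa_ge_EE m c : (c < n)%nat -> EE th m c <= aa (lenN n th m c).
Proof.
  intros Hc. unfold EE, aa. apply ln_le_mono; [apply lt_0_INR; pose proof (NN_pos n th Hrs m c Hc); lia|].
  apply le_INR, NN_le_pl; auto.
Qed.

Lemma lower eps : 0 < eps -> forall l, (1 <= l)%nat -> (rho - eps) * INR l <= aa l.
Proof.
  intros Heps l Hl.
  destruct (Rle_lt_dec ((rho - eps) * INR l) (aa l)) as [H|H]; auto. exfalso.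
  pose proof (aa_nonneg l) as Ha0. assert (Hl' : 1 <= INR l) by (apply (le_INR 1); auto).
  assert (Hre : 0 < rho - eps) by nra.
  destruct (HPL (eps / 2) ltac:(lra)) as [m0 Hm0].
  destruct (Lr_growth n th Hn Hrs Hsc lam Rv HPF p Hp1 Hp Hlam (2 * INR l * ln (INR n) / eps + 1)) as [m1 Hm1].
  set (m := Nat.max m0 m1). set (K := lenN n th m 0).
  assert (HK : 2 * INR l * ln (INR n) / eps + 1 <= INR K) by (apply Hm1; [unfold m; lia|auto]).
  destruct (Hm0 m ltac:(unfold m; lia) 0%nat Hn) as [HE _].
  pose proof (aa_ge_EE m 0 Hn) as HaK. fold K in HaK. unfold Lr in HE. fold K in HE.
  pose proof (Nat.div_mod K l ltac:(lia)) as Hdm. pose proof (Nat.mod_upper_bound K l ltac:(lia)) as Hmod.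
  set (q := (K / l)%nat) in *. set (r := (K mod l)%nat) in *.
  pose proof (aa_mult q l r) as Hm. replace (q * l + r)%nat with K in Hm by lia.
  pose proof (aa_small r) as Hs. pose proof ln_n_nonneg.
  assert (Hr : INR r <= INR l) by (apply le_INR; lia).
  assert (HKe : INR K = INR q * INR l + INR r) by (rewrite Hdm at 1; rewrite plus_INR, mult_INR; ring).
  assert (Hq : 0 <= INR q) by apply pos_INR.
  assert (INR q * aa l <= INR q * ((rho - eps) * INR l)) by (apply Rmult_le_compat_l; lra).
  assert (INR r * ln (INR n) <= INR l * ln (INR n)) by (apply Rmult_le_compat_r; lra).
  assert (Hqr : INR q * INR l <= INR K) by (pose proof (pos_INR r); lra).
  (* (rho - eps/2) K <= aa K <= q aa_l + l ln n <= (rho - eps) K + l ln n *)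
  assert (INR q * ((rho - eps) * INR l) <= (rho - eps) * INR K).
  { replace (INR q * ((rho - eps) * INR l)) with ((rho - eps) * (INR q * INR l)) by ring.
    apply Rmult_le_compat_l; lra. }
  assert ((rho - eps / 2) * INR K <= (rho - eps) * INR K + INR l * ln (INR n)) by lra.
  assert (eps / 2 * INR K <= INR l * ln (INR n)) by lra.
  assert (2 * INR l * ln (INR n) / eps * (eps / 2) = INR l * ln (INR n)) by (field; lra).
  assert ((2 * INR l * ln (INR n) / eps + 1) * (eps / 2) <= INR K * (eps / 2)) by (apply Rmult_le_compat_r; lra).
  lra.
Qed.

Lemma upper_k eps : 0 < eps -> exists k, (1 <= k)%nat /\ aa k <= (rho + eps / 2) * INR k.
Proof.
  intros Heps. set (e6 := eps / 6).
  assert (He6 : 0 < e6) by (unfold e6; lra).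
  assert (Hln2 : 0 <= ln (INR (2 * n))) by (apply ln_nonneg_nat; lia).
  destruct (INR_unbounded (ln (INR (2 * n)) / e6)) as [B0 HB0]. set (B := S B0).
  assert (HB1 : (1 <= B)%nat) by (unfold B; lia).
  assert (HBr : ln (INR (2 * n)) / INR B <= e6).
  { unfold B. rewrite S_INR. pose proof (pos_INR B0).
    destruct (Req_dec (ln (INR (2 * n))) 0) as [E|E]; [rewrite E; unfold Rdiv; rewrite !Rmult_0_l; lra|].
    assert (Hlp : 0 < ln (INR (2 * n))) by lra.
    apply Rle_trans with (ln (INR (2 * n)) / (ln (INR (2 * n)) / e6)).
    - apply Rmult_le_compat_l; auto. apply Rinv_le_contravar; [apply Rdiv_lt_0_compat; lra|lra].
    - right; field. split; lra. }
  destruct (HPL e6 He6) as [m0 Hm0].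
  destruct (Lr_growth n th Hn Hrs Hsc lam Rv HPF p Hp1 Hp Hlam (INR B)) as [m1 Hm1].
  set (m := Nat.max m0 m1).
  assert (HB : forall c, (c < n)%nat -> (B <= lenN n th m c)%nat).
  { intros c Hc. apply INR_le. apply (Hm1 m ltac:(unfold m; lia) c Hc). }
  set (beta := rho + e6).
  assert (HE : forall c, (c < n)%nat -> EE th m c <= beta * INR (lenN n th m c)).
  { intros c Hc. apply (Hm0 m ltac:(unfold m; lia) c Hc). }
  set (Lm := Lmax n th m).
  set (C0 := INR (2 * Lm) * (e6 + beta) + ln (INR (S Lm))).
  assert (HC0 : 0 <= C0).
  { unfold C0. apply Rplus_le_le_0_compat; [apply Rmult_le_pos; [apply pos_INR|unfold beta; lra]|].
    apply ln_nonneg_nat; lia. }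
  destruct (INR_unbounded (C0 / e6)) as [k0 Hk0]. set (k := S k0).
  exists k. split; [unfold k; lia|].
  pose proof (pl_upper n th Hrs Hsc p Hp1 Hp m k B beta ltac:(lia) HB1 HB ltac:(unfold beta; lra) HE) as Hu.
  fold Lm in Hu. set (T := ((k + 2 * Lm) / B)%nat) in Hu.
  assert (HT : INR T * INR B <= INR (k + 2 * Lm)).
  { rewrite <- mult_INR. apply le_INR. unfold T. rewrite Nat.mul_comm. apply Nat.Div0.mul_div_le. }
  assert (HX : 0 < INR (2 * n) ^ T * (INR (S Lm) * exp (beta * INR (k + 2 * Lm)))).
  { apply Rmult_lt_0_compat; [apply pow_lt; apply lt_0_INR; lia|apply Rmult_lt_0_compat; [apply lt_0_INR; lia|apply exp_pos]]. }
  assert (Hak : aa k <= INR T * ln (INR (2 * n)) + ln (INR (S Lm)) + beta * INR (k + 2 * Lm)).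
  { unfold aa. eapply Rle_trans; [apply ln_le_mono; [apply INR_pl_pos|apply Hu]|].
    rewrite ln_mult, ln_mult, ln_pow, ln_exp; try lra; try apply pow_lt; try apply lt_0_INR; try lia; try apply exp_pos.
    apply Rmult_lt_0_compat; [apply lt_0_INR; lia|apply exp_pos]. }
  assert (HT2 : INR T * ln (INR (2 * n)) <= INR (k + 2 * Lm) * e6).
  { assert (HBp : 0 < INR B) by (apply lt_0_INR; lia).
    replace (INR T * ln (INR (2 * n))) with (INR T * INR B * (ln (INR (2 * n)) / INR B)) by (field; lra).
    apply Rmult_le_compat; try lra.
    - apply Rmult_le_pos; apply pos_INR.
    - unfold Rdiv; apply Rmult_le_pos; [lra|left; apply Rinv_0_lt_compat; lra]. }
  rewrite plus_INR, mult_INR in *. simpl (INR 2) in *.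
  assert (Hk : C0 <= e6 * INR k).
  { unfold k. rewrite S_INR. assert (C0 / e6 * e6 = C0) by (field; lra). assert (C0 / e6 * e6 <= INR k0 * e6) by (apply Rmult_le_compat_r; lra). lra. }
  unfold C0 in Hk. rewrite mult_INR in Hk. simpl (INR 2) in Hk.
  assert (E2 : eps / 2 = 3 * e6) by (unfold e6; field). rewrite E2.
  unfold beta in *. rewrite mult_INR in Hak, HT2. simpl (INR 2) in Hak, HT2. clear -Hak HT2 Hk. lra.
Qed.

Lemma upper eps : 0 < eps -> exists N, forall l, (N <= l)%nat -> aa l <= (rho + eps) * INR l.
Proof.
  intros Heps. destruct (upper_k eps Heps) as [k [Hk1 Hk]].
  pose proof ln_n_nonneg.
  destruct (INR_unbounded (2 * INR k * ln (INR n) / eps)) as [N HN].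
  exists N. intros l Hl.
  pose proof (Nat.div_mod l k ltac:(lia)) as Hdm. pose proof (Nat.mod_upper_bound l k ltac:(lia)) as Hmod.
  set (q := (l / k)%nat) in *. set (r := (l mod k)%nat) in *.
  pose proof (aa_mult q k r) as Hm. replace (q * k + r)%nat with l in Hm by lia.
  pose proof (aa_small r) as Hs.
  assert (Hr : INR r <= INR k) by (apply le_INR; lia).
  assert (Hle : INR l = INR q * INR k + INR r) by (rewrite Hdm at 1; rewrite plus_INR, mult_INR; ring).
  assert (Hq : 0 <= INR q) by apply pos_INR. assert (0 <= INR r) by apply pos_INR.
  assert (INR q * aa k <= INR q * ((rho + eps / 2) * INR k)) by (apply Rmult_le_compat_l; lra).
  assert (INR r * ln (INR n) <= INR k * ln (INR n)) by (apply Rmult_le_compat_r; lra).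
  assert (INR N <= INR l) by (apply le_INR; lia).
  assert (2 * INR k * ln (INR n) / eps * (eps / 2) = INR k * ln (INR n)) by (field; lra).
  assert (2 * INR k * ln (INR n) / eps * (eps / 2) <= INR l * (eps / 2)) by (apply Rmult_le_compat_r; lra).
  nra.
Qed.

Lemma entropy_conv : Un_cv (fun l => ln (INR (pl n th l)) / INR l) rho.
Proof.
  intros eps Heps. destruct (upper (eps / 2) ltac:(lra)) as [N HN].
  exists (Nat.max N 1). intros l Hl. unfold Rdist.
  assert (Hl0 : 1 <= INR l) by (apply (le_INR 1); lia).
  pose proof (HN l ltac:(lia)). pose proof (lower (eps / 2) ltac:(lra) l ltac:(lia)).
  fold (aa l) in *. assert (Hd : aa l / INR l * INR l = aa l) by (field; lra).
  assert (aa l / INR l <= rho + eps / 2).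
  { apply Rmult_le_reg_r with (INR l); [lra|]. rewrite Hd; lra. }
  assert (rho - eps / 2 <= aa l / INR l).
  { apply Rmult_le_reg_r with (INR l); [lra|]. rewrite Hd; lra. }
  apply Rabs_def1; lra.
Qed.

Lemma entropy_main : top_entropy n th rho.
Proof.
  split.
  - exists (pl n th). intros l; apply (card_lang_pl n th Hrs).
  - intros c Hc. intros eps Heps. destruct (entropy_conv eps Heps) as [N HN]. exists N. intros l Hl.
    rewrite (card_lang_unique n th Hrs l (c l) (Hc l)). apply HN; auto.
Qed.

End Entropy.

Lemma ln_0 : ln 0 = 0.
Proof. unfold ln. case (Rlt_dec 0 0); intros H; [exfalso; exact (Rlt_irrefl 0 H)|reflexivity]. Qed.

Lemma NoDup_const_len (l : list (list nat)) : NoDup l -> (forall x y, In x l -> In y l -> x = y) -> (length l <= 1)%nat.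
Proof.
  intros HN H. destruct l as [|x l']; [simpl; lia|].
  change 1%nat with (length [x]). apply NoDup_incl_length; auto.
  intros y Hy. left. symmetry. apply H; simpl; auto.
Qed.

Section Degen.
Variable n : nat.
Variable th : rsubst.
Hypothesis Hn : (0 < n)%nat.
Hypothesis Hrs : is_random_subst n th.
Hypothesis Hsc : semi_compatible n th.
Variable lam : R.
Variable Rv : nat -> R.
Hypothesis HPF : PF_pair n (subst_matrix th) lam Rv.
Variable p : nat.
Hypothesis Hp1 : (1 <= p)%nat.

Lemma lam_decomp : lam - 1 = rsum n (fun c => Rv c * (Lr n th 1 c - 1)).
Proof.
  rewrite <- (W_Lr1 n th Hn lam Rv HPF p Hp1). unfold W.
  rewrite (rsum_ext n (fun c => Rv c * (Lr n th 1 c - 1)) (fun c => Rv c * Lr n th 1 c + (-1) * Rv c)) by (intros; ring).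
  rewrite rsum_add, rsum_scal, (proj1 (proj2 HPF)). ring.
Qed.

Lemma degen_len1 : lam <= 1 -> forall c, (c < n)%nat -> lenN n th 1 c = 1%nat.
Proof.
  intros Hl c Hc.
  assert (Hnn : forall c, (c < n)%nat -> 0 <= Rv c * (Lr n th 1 c - 1)).
  { intros c' Hc'. apply Rmult_le_pos; [left; apply (proj1 HPF); auto|].
    pose proof (Lr_pos n th Hn Hrs Hsc p Hp1 1 c' Hc'); lra. }
  pose proof (rsum_ge_term n _ c Hnn Hc) as H1. rewrite <- lam_decomp in H1.
  pose proof (Hnn c Hc). assert (Rv c * (Lr n th 1 c - 1) = 0) by lra.
  pose proof (proj1 HPF c Hc). assert (Lr n th 1 c = 1) by nra.
  unfold Lr in H3. change 1 with (INR 1) in H3. apply INR_eq; auto.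
Qed.

Hypothesis Hl : lam <= 1.

Lemma degen_lenN m c : (c < n)%nat -> lenN n th m c = 1%nat.
Proof.
  revert c; induction m; intros c Hc.
  - apply (lenN_0 n th Hn p Hp1); auto.
  - rewrite lenN_S. rewrite <- (degen_len1 Hl c Hc). rewrite lenN_S.
    apply nsum_ext; intros i Hi. rewrite IHm, (lenN_0 n th Hn p Hp1); auto.
Qed.

Lemma degen_q1 c : (c < n)%nat -> q1 th c = 0.
Proof.
  intros Hc. unfold q1. replace (length (th c)) with 1%nat; [simpl; apply ln_1|].
  assert (Hlen : forall w, In w (th c) -> length w = 1%nat).
  { intros w Hw. rewrite <- (degen_len1 Hl c Hc). eapply length_subst_pow_single; eauto.
    apply in_subst_pow_S_single. exists w; simpl; auto. }
  apply Nat.le_antisymm.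
  - destruct (th c) eqn:E; [now destruct (Hrs c Hc)|simpl; lia].
  - apply NoDup_const_len; [apply (Hrs c Hc)|]. intros x y Hx Hy.
    pose proof (Hlen x Hx) as Lx. pose proof (Hlen y Hy) as Ly.
    destruct x as [|b [|]]; simpl in Lx; try lia. destruct y as [|b' [|]]; simpl in Ly; try lia.
    pose proof (Hsc c Hc [b] [b'] Hx Hy b) as Ho. unfold occ in Ho; simpl in Ho.
    destruct (Nat.eq_dec b b); [|contradiction]. destruct (Nat.eq_dec b' b); [subst; auto|discriminate].
Qed.

Lemma degen_a : rsum n (fun i => q1 th i * Rv i) = 0.
Proof. apply rsum_zero; intros i Hi; rewrite degen_q1; auto; ring. Qed.

Lemma degen_legal w : in_language n th w -> (length w <= 1)%nat.
Proof.
  intros [a [m [v [Ha [Hv [pre [s E]]]]]]].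
  assert (length v = 1%nat) by (rewrite <- (degen_lenN m a Ha); eapply length_subst_pow_single; eauto).
  rewrite <- E in H. rewrite !length_app in H. lia.
Qed.

Lemma degen_entropy : top_entropy n th 0.
Proof.
  split.
  - exists (pl n th). intros l; apply (card_lang_pl n th Hrs).
  - intros c Hc eps Heps. exists 2%nat. intros l Hl2.
    rewrite (card_lang_unique n th Hrs l (c l) (Hc l)).
    assert (pl n th l = 0%nat).
    { unfold pl. destruct (Lang n th l) as [|w L] eqn:E; auto.
      assert (In w (Lang n th l)) by (rewrite E; simpl; auto).
      apply (in_Lang n th Hrs) in H. destruct H as [Hw Hlw]. apply degen_legal in Hw. lia. }
    rewrite H. simpl INR. rewrite ln_0. unfold Rdist. unfold Rdiv. rewrite Rmult_0_l, Rminus_0_r, Rabs_R0. lra.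
Qed.

End Degen.

Theorem mainTheorem9 (n : nat) (th : rsubst) (lam : R) (Rv : nat -> R) :
  (0 < n)%nat ->
  is_random_subst n th ->
  semi_compatible n th ->
  primitive_mx n (subst_matrix th) ->
  PF_pair n (subst_matrix th) lam Rv ->
  (identical_set_cond n th ->
     top_entropy n th (/ lam * rsum n (fun i => q1 th i * Rv i))) /\
  (disjoint_set_cond n th ->
     top_entropy n th (/ (lam - 1) * rsum n (fun i => q1 th i * Rv i))).
Proof.
  intros Hn Hrs Hsc [p [Hp1 Hp]] HPF.
  destruct (Rle_lt_dec lam 1) as [Hl|Hl].
  - assert (Hz : rsum n (fun i => q1 th i * Rv i) = 0) by (eapply degen_a; eauto).
    rewrite Hz, !Rmult_0_r.
    split; intros _; eapply degen_entropy; eauto.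
  - assert (Ha := a_nonneg n th Hn Hrs lam Rv HPF p Hp1).
    split; intros H.
    + apply (entropy_main n th Hn Hrs Hsc lam Rv HPF p Hp1 Hp Hl).
      * apply Rmult_le_pos; auto. left; apply Rinv_0_lt_compat; lra.
      * apply (PL_identical n th Hn Hrs Hsc lam Rv HPF p Hp1 Hp H).
    + apply (entropy_main n th Hn Hrs Hsc lam Rv HPF p Hp1 Hp Hl).
      * apply Rmult_le_pos; auto. left; apply Rinv_0_lt_compat; lra.
      * apply (PL_disjoint n th Hn Hrs Hsc lam Rv HPF p Hp1 Hp H Hl).
Qed.
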